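(* Let $v(0)\in\mathcal N^*$, $v(0)\neq0$, and let $v(t)$ be the unique solution of the critical equations with initial condition $v(0)$, with $\Phi(t)=m_0(0)-m_0(t)$. Then, with $t_{gel}=1/m_1(0)$, $$\Phi(T)=\begin{cases}0& T\le t_{gel}\\ F_0(T)& T\ge t_{gel}\end{cases}\qquad\text{and}\qquad \int_0^T\Phi(t)dt=\begin{cases}0& T\le t_{gel}\\ G_0(T)& T\ge t_{gel}.\end{cases}$$
   Context: $\mathcal N$: sequences $v=(v_k)_{k\ge1}$ of nonnegative reals with $\sum_kv_k<\infty$; $\mathcal N^*$: those with finitely many nonzero terms; $m_0=\sum_kv_k$, $m_1=\sum_kkv_k$. Critical equations: $v(t)\in\mathcal N$ with $v_k(t)=v_k(0)+\int_0^t\big(\tfrac k2\sum_{l=1}^{k-1}v_lv_{k-l}-kv_km_0(s)\big)ds$ for all $k$, $m_0(0)-m_0(t)$ nondecreasing in $[0,m_0(0))$. Functions $F_0,G_0$ on $(0,\infty)$: for $x\in\mathbb R$ put $w(x):=\big(\sum_kkv_k(0)e^{-kx}\big)^{-1}$, a strictly increasing bijection $\mathbb R\to(0,\infty)$, and define $F_0(w(x)):=\sum_kv_k(0)(1-e^{-kx})$ and $G_0(w(x)):=w(x)F_0(w(x))-x$. (Equivalently, with $U_0(x)=\sum_kv_k(0)(e^{-kx}-1)$ and $X_0$ its inverse function, $F_0(-X_0'(u))=-u$ and $G_0(w)=-\min_u\{wu+X_0(u)\}$ is the Legendre transform.) *)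

(* Defs.v *)
From Stdlib Require Import Reals Lra ClassicalEpsilon.
From Coquelicot Require Import Coquelicot.
Open Scope R_scope.

(* A sequence v = (v_k)_{k>=1} is modelled as v : nat -> R; the entry v 0 is ignored. *)

Definition m0 (v : nat -> R) : R := Series (fun n => v (S n)).
Definition m1 (v : nat -> R) : R := Series (fun n => INR (S n) * v (S n)).

Definition in_N (v : nat -> R) : Prop :=
  (forall k, (1 <= k)%nat -> 0 <= v k) /\ ex_series (fun n => v (S n)).

Definition in_Nstar (v : nat -> R) : Prop :=
  in_N v /\ exists K : nat, forall k, (K < k)%nat -> v k = 0.

Definition conv (v : nat -> R) (k : nat) : R :=
  sum_n_m (fun l => v l * v (k - l)%nat) 1 (k - 1).

Definition crit_rhs (v : nat -> R) (k : nat) : R :=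
  INR k / 2 * conv v k - INR k * v k * m0 v.

Definition critical_solution (v : R -> nat -> R) : Prop :=
  (forall t, 0 <= t -> in_N (v t)) /\
  (forall k t, (1 <= k)%nat -> 0 <= t ->
     is_RInt (fun s => crit_rhs (v s) k) 0 t (v t k - v 0 k)) /\
  (forall s t, 0 <= s -> s <= t -> m0 (v 0) - m0 (v s) <= m0 (v 0) - m0 (v t)) /\
  (forall t, 0 <= t -> 0 <= m0 (v 0) - m0 (v t) < m0 (v 0)).

Definition wfun (v : nat -> R) (x : R) : R :=
  / Series (fun n => INR (S n) * v (S n) * exp (- INR (S n) * x)).

(* the x with w(x) = T (w is a bijection R -> (0,oo)) *)
Definition winv (v : nat -> R) (T : R) : R :=
  epsilon (inhabits 0) (fun x => wfun v x = T).

(* F_0(w(x)) = sum_k v_k (1 - e^{-kx}) *)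
Definition F0 (v : nat -> R) (T : R) : R :=
  Series (fun n => v (S n) * (1 - exp (- INR (S n) * winv v T))).

(* G_0(w(x)) = w(x) F_0(w(x)) - x *)
Definition G0 (v : nat -> R) (T : R) : R := T * F0 v T - winv v T.

Definition Phi (v : R -> nat -> R) (t : R) : R := m0 (v 0) - m0 (v t).

(* Main.v *)
Require Import Defs.
From Stdlib Require Import Reals Lra Lia ClassicalEpsilon ZArith.
From Coquelicot Require Import Coquelicot.
Open Scope R_scope.

Module P1.

Fixpoint fsum (f : nat -> R) (N : nat) : R :=
  match N with O => 0 | S n => fsum f n + f (S n) end.

Lemma fsum_ext f g N : (forall k, (1 <= k <= N)%nat -> f k = g k) -> fsum f N = fsum g N.
Proof.
  induction N; intros H; simpl; auto.
  rewrite IHN; [rewrite H; auto; lia|]. intros; apply H; lia.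
Qed.

Lemma fsum_nonneg f N : (forall k, (1 <= k)%nat -> 0 <= f k) -> 0 <= fsum f N.
Proof. induction N; intros H; simpl; [lra|]. specialize (IHN H). specialize (H (S N)). assert (0 <= f (S N)) by (apply H; lia). lra. Qed.

Lemma fsum_le f g N : (forall k, (1 <= k <= N)%nat -> f k <= g k) -> fsum f N <= fsum g N.
Proof. induction N; intros H; simpl; [lra|]. assert (f (S N) <= g (S N)) by (apply H; lia).
  assert (fsum f N <= fsum g N) by (apply IHN; intros; apply H; lia). lra. Qed.

Lemma fsum_mono f N M : (forall k, (1 <= k)%nat -> 0 <= f k) -> (N <= M)%nat -> fsum f N <= fsum f M.
Proof. intros H HNM. induction HNM; [lra|]. simpl. specialize (H (S m)). assert (0 <= f (S m)) by (apply H; lia). lra. Qed.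

Lemma fsum_plus f g N : fsum (fun k => f k + g k) N = fsum f N + fsum g N.
Proof. induction N; simpl; lra. Qed.
Lemma fsum_scal c f N : fsum (fun k => c * f k) N = c * fsum f N.
Proof. induction N; simpl; [lra|]. rewrite IHN; lra. Qed.
Lemma fsum_minus f g N : fsum (fun k => f k - g k) N = fsum f N - fsum g N.
Proof. induction N; simpl; lra. Qed.
Lemma fsum_zero N : fsum (fun _ => 0) N = 0.
Proof. induction N; simpl; lra. Qed.

Lemma sum_f_R0_fsum f N : sum_f_R0 (fun n => f (S n)) N = fsum f (S N).
Proof. induction N; simpl; [lra|]. rewrite IHN. simpl. lra. Qed.

Lemma sum_n_m_fsum f N : sum_n_m f 1 N = fsum f N.
Proof.
  induction N.
  - rewrite sum_n_m_zero; [reflexivity|lia].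
  - rewrite sum_n_Sm; [|lia]. rewrite IHN. reflexivity.
Qed.

Lemma fsum_abs_le f N : Rabs (fsum f N) <= fsum (fun k => Rabs (f k)) N.
Proof. induction N; simpl. rewrite Rabs_R0; lra.
  eapply Rle_trans; [apply Rabs_triang|]. lra. Qed.

Lemma series_fsum_lim f : ex_series (fun n => f (S n)) ->
  forall eps, 0 < eps -> exists N0, forall N, (N0 <= N)%nat ->
    Rabs (fsum f N - Series (fun n => f (S n))) < eps.
Proof.
  intros Hex eps Heps.
  pose proof (Series_correct _ Hex) as Hs.
  apply is_series_Reals in Hs.
  destruct (Hs eps Heps) as [N0 HN0].
  exists (S N0). intros N HN. destruct N as [|N]; [lia|].
  rewrite <- sum_f_R0_fsum. apply HN0. lia.
Qed.

Lemma series_ge_fsum f N : (forall k, (1 <= k)%nat -> 0 <= f k) ->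
  ex_series (fun n => f (S n)) -> fsum f N <= Series (fun n => f (S n)).
Proof.
  intros Hp Hex.
  destruct (Rle_or_lt (fsum f N) (Series (fun n => f (S n)))) as [H|H]; auto.
  exfalso. set (d := fsum f N - Series (fun n => f (S n))).
  destruct (series_fsum_lim f Hex d) as [N0 HN0]. unfold d; lra.
  specialize (HN0 (Nat.max N0 N) ltac:(lia)).
  assert (fsum f N <= fsum f (Nat.max N0 N)) by (apply fsum_mono; auto; lia).
  apply Rabs_def2 in HN0. unfold d in *. lra.
Qed.

Lemma series_le_bound f B : ex_series (fun n => f (S n)) ->
  (forall N, fsum f N <= B) -> Series (fun n => f (S n)) <= B.
Proof.
  intros Hex HB.
  destruct (Rle_or_lt (Series (fun n => f (S n))) B) as [H|H]; auto.
  exfalso. destruct (series_fsum_lim f Hex (Series (fun n => f (S n)) - B)) as [N0 HN0]. lra.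
  specialize (HN0 N0 (le_n _)). specialize (HB N0). apply Rabs_def2 in HN0. lra.
Qed.

Lemma series_finite f K : (forall k, (K < k)%nat -> f k = 0) ->
  Series (fun n => f (S n)) = fsum f K.
Proof.
  intros HK. apply is_series_unique. apply is_series_Reals.
  intros eps Heps. exists K. intros n Hn. rewrite sum_f_R0_fsum.
  replace (fsum f (S n)) with (fsum f K). unfold R_dist. rewrite Rminus_diag, Rabs_R0. lra.
  assert (forall m, (K <= m)%nat -> fsum f m = fsum f K).
  { intros m Hm. induction Hm; auto. simpl. rewrite IHHm, HK; [lra|lia]. }
  symmetry. apply H. lia.
Qed.

Lemma ex_series_finite f K : (forall k, (K < k)%nat -> f k = 0) -> ex_series (fun n => f (S n)).
Proof.
  intros HK. exists (fsum f K). apply is_series_Reals.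
  intros eps Heps. exists K. intros n Hn. rewrite sum_f_R0_fsum.
  replace (fsum f (S n)) with (fsum f K). unfold R_dist. rewrite Rminus_diag, Rabs_R0. lra.
  assert (forall m, (K <= m)%nat -> fsum f m = fsum f K).
  { intros m Hm. induction Hm; auto. simpl. rewrite IHHm, HK; [lra|lia]. }
  symmetry. apply H. lia.
Qed.

End P1.
Import P1.

Module P2.

Lemma abs_le_inv x e : Rabs x <= e -> - e <= x <= e.
Proof. intros H. unfold Rabs in H. destruct (Rcase_abs x); lra. Qed.
Lemma abs_le_intro x e : - e <= x <= e -> Rabs x <= e.
Proof. intros H. unfold Rabs. destruct (Rcase_abs x); lra. Qed.

Definition RD (h : R -> R) (x d : R) := forall eps, 0 < eps -> exists delta, 0 < delta /\
  forall r, 0 < r < delta -> Rabs (h (x + r) - h x - r * d) <= eps * r.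

Definition LC (h : R -> R) (a x : R) := forall eps, 0 < eps -> exists delta, 0 < delta /\
  forall y, x - delta < y <= x -> a <= y -> Rabs (h y - h x) <= eps.

Lemma rd_mono_eps h a b eps : a <= b -> 0 < eps ->
  (forall x, a < x <= b -> LC h a x) ->
  (forall x, a <= x < b -> exists d, d <= 0 /\ RD h x d) ->
  h b - h a <= eps * (b - a).
Proof.
  intros Hab Heps HLC HRD.
  set (E := fun y => a <= y <= b /\ forall z, a <= z <= y -> h z - h a <= eps * (z - a)).
  assert (HEa : E a). { split; [lra|]. intros z Hz. replace z with a by lra. lra. }
  assert (Hb : bound E). { exists b. intros y [Hy _]. lra. }
  destruct (completeness E Hb (ex_intro _ a HEa)) as [s0 [Hub Hlub]].
  assert (Has0 : a <= s0) by (apply Hub; auto).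
  assert (Hs0b : s0 <= b) by (apply Hlub; intros y [Hy _]; lra).
  assert (Hs0E : E s0).
  { split; [lra|]. intros z Hz.
    destruct (Rle_lt_or_eq_dec z s0 (proj2 Hz)) as [Hlt|Heq].
    -
      destruct (classic (exists y, E y /\ z < y)) as [[y [[_ Hy] Hzy]]|Hn].
      + apply Hy; lra.
      + exfalso. assert (s0 <= z). { apply Hlub. intros y Hy. destruct (Rle_or_lt y z); auto. exfalso; apply Hn; eauto. }
        lra.
    - subst z. destruct (Req_dec s0 a) as [Heq|Hne]. { subst. lra. }
      assert (Hlt: a < s0) by lra.
      destruct (Rle_or_lt (h s0 - h a) (eps * (s0 - a))) as [Hok|Hbad]; auto.
      exfalso. set (eta := h s0 - h a - eps * (s0 - a)).
      destruct (HLC s0 (conj Hlt Hs0b) (eta/2) ltac:(unfold eta; lra)) as [dl [Hdl Hc]].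
      destruct (classic (exists y, E y /\ Rmax a (s0 - dl) < y)) as [[y [[Hy1 Hy] Hyl]]|Hn].
      + assert (y <= s0) by (apply Hub; split; auto).
        assert (Hy' := Hy y ltac:(lra)).
        assert (Hcy := Hc y ltac:(split; [apply Rle_lt_trans with (Rmax a (s0-dl)); [apply Rmax_r|]; lra|lra]) ltac:(lra)).
        apply abs_le_inv in Hcy. unfold eta in *. nra.
      + assert (s0 <= Rmax a (s0 - dl)). { apply Hlub. intros y Hy. destruct (Rle_or_lt y (Rmax a (s0-dl))); auto. exfalso; apply Hn; eauto. }
        unfold Rmax in H; destruct (Rle_dec a (s0 - dl)); lra. }
  destruct (Req_dec s0 b) as [Hsb|Hsb].
  - subst s0. destruct Hs0E as [_ H]. apply H. lra.
  - exfalso. destruct (HRD s0 ltac:(lra)) as [d [Hd Hrd]].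
    destruct (Hrd eps Heps) as [dr [Hdr Hr]].
    set (r := Rmin (dr/2) (b - s0)).
    assert (Hr0 : 0 < r) by (unfold r, Rmin; destruct (Rle_dec (dr/2) (b - s0)); lra).
    assert (Hr1 : r <= dr / 2) by apply Rmin_l.
    assert (Hr2 : r <= b - s0) by apply Rmin_r.
    assert (E (s0 + r)).
    { split; [lra|]. intros z Hz. destruct (Rle_or_lt z s0) as [Hz1|Hz1].
      - apply (proj2 Hs0E). lra.
      - specialize (Hr (z - s0) ltac:(lra)). replace (s0 + (z - s0)) with z in Hr by ring.
        apply abs_le_inv in Hr. destruct Hs0E as [_ H]. specialize (H s0 ltac:(lra)).
        assert (0 < z - s0) by lra. nra. }
    assert (s0 + r <= s0) by (apply Hub; auto). lra.
Qed.

Lemma rd_mono h a b : a <= b ->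
  (forall x, a < x <= b -> LC h a x) ->
  (forall x, a <= x < b -> exists d, d <= 0 /\ RD h x d) ->
  h b <= h a.
Proof.
  intros Hab HLC HRD.
  destruct (Rle_or_lt (h b) (h a)) as [H|H]; auto. exfalso.
  destruct (Req_dec a b) as [Heq|Hne]. { subst. lra. }
  set (eps := (h b - h a) / (2 * (b - a))).
  assert (Heps : 0 < eps) by (unfold eps; apply Rdiv_lt_0_compat; lra).
  pose proof (rd_mono_eps h a b eps Hab Heps HLC HRD).
  unfold eps in H0. field_simplify in H0; [|lra]. lra.
Qed.

Lemma rd_const h a b : a <= b ->
  (forall x, a < x <= b -> LC h a x) ->
  (forall x, a <= x < b -> RD h x 0) ->
  h b = h a.
Proof.
  intros Hab HLC HRD. apply Rle_antisym.
  - apply rd_mono; auto. intros x Hx; exists 0; split; [lra|auto].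
  - assert (- h b <= - h a); [|lra].
    apply (rd_mono (fun x => - h x)); auto.
    + intros x Hx eps Heps. destruct (HLC x Hx eps Heps) as [d [Hd H]]. exists d; split; auto.
      intros y Hy Hay. specialize (H y Hy Hay). rewrite <- Rabs_Ropp. replace (- (- h y - - h x)) with (h y - h x) by ring. auto.
    + intros x Hx. exists 0. split; [lra|]. intros eps Heps.
      destruct (HRD x Hx eps Heps) as [d [Hd H]]. exists d; split; auto. intros r Hr.
      specialize (H r Hr). rewrite <- Rabs_Ropp. replace (- (- h (x + r) - - h x - r * 0)) with (h (x + r) - h x - r * 0) by ring. auto.
Qed.

End P2.
Import P2.

Module P3.

Lemma fsum_ones n : fsum (fun _ => 1) n = INR n.
Proof. induction n; simpl fsum; [simpl; lra|]. rewrite IHn, S_INR. lra. Qed.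

Lemma count_bound n d y : 0 < d -> 0 <= y <= (INR n + 1) * d ->
  let s := fsum (fun j => if Rle_dec (INR j * d) y then 1 else 0) n in
  s * d <= y <= s * d + d.
Proof.
  intros Hd. induction n; intros Hy s.
  - unfold s; simpl. simpl in Hy. lra.
  - destruct (Rle_or_lt ((INR (S n)) * d) y) as [H1|H1].
    + assert (Hs : s = INR (S n)).
      { unfold s. rewrite <- fsum_ones. apply fsum_ext. intros k Hk.
        destruct (Rle_dec (INR k * d) y) as [|Hn]; auto. exfalso. apply Hn.
        apply Rle_trans with (INR (S n) * d); auto. apply Rmult_le_compat_r; [lra|]. apply le_INR; lia. }
      rewrite Hs. rewrite S_INR in *. lra.
    + assert (Hs : s = fsum (fun j => if Rle_dec (INR j * d) y then 1 else 0) n).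
      { unfold s. cbn [fsum]. destruct (Rle_dec (INR (S n) * d) y); lra. }
      rewrite Hs. apply IHn. rewrite S_INR in H1. lra.
Qed.

Lemma ex_RInt_fsum (F : nat -> R -> R) a b n : (forall j, ex_RInt (F j) a b) ->
  ex_RInt (fun x => fsum (fun j => F j x) n) a b.
Proof.
  intros H. induction n; simpl.
  - apply ex_RInt_const.
  - apply (ex_RInt_plus (fun x => fsum (fun j => F j x) n) (F (S n))); auto.
Qed.

Section Mono.
Variables (f : R -> R) (a b : R).
Hypothesis Hab : a <= b.
Hypothesis Hmono : forall x y, a <= x -> x <= y -> y <= b -> f y <= f x.

Let fe x := f (Rmin b (Rmax a x)).

Lemma clamp_in x : a <= Rmin b (Rmax a x) <= b.
Proof. unfold Rmin, Rmax; repeat destruct Rle_dec; lra. Qed.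

Lemma fe_mono x y : x <= y -> fe y <= fe x.
Proof. intros H. unfold fe. pose proof (clamp_in x); pose proof (clamp_in y). apply Hmono; try tauto.
  unfold Rmin, Rmax; repeat destruct Rle_dec; lra. Qed.

Lemma fe_bounds x : f b <= fe x <= f a.
Proof. unfold fe. pose proof (clamp_in x). split; apply Hmono; lra. Qed.

Let ind c x := if Rle_dec c (fe x) then 1 else 0.

Lemma ex_RInt_ind c : ex_RInt (ind c) a b.
Proof.
  destruct (Rle_or_lt c (f a)) as [Hc|Hc].
  - set (D := fun y => a <= y <= b /\ c <= fe y).
    assert (HDa : D a). { split; [lra|]. unfold fe. replace (Rmin b (Rmax a a)) with a; [lra|].
      unfold Rmin, Rmax; repeat destruct Rle_dec; lra. }
    assert (HbD : bound D) by (exists b; intros y [Hy _]; lra).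
    destruct (completeness D HbD (ex_intro _ a HDa)) as [tau [Hub Hlub]].
    assert (a <= tau) by (apply Hub; auto).
    assert (tau <= b) by (apply Hlub; intros y [Hy _]; lra).
    apply ex_RInt_Chasles with tau.
    + apply ex_RInt_ext with (fun _ => 1); [|apply ex_RInt_const].
      intros x Hx. rewrite Rmin_left in Hx by lra. rewrite Rmax_right in Hx by lra.
      unfold ind. destruct (Rle_dec c (fe x)) as [|Hn]; auto. exfalso.
      destruct (classic (exists z, D z /\ x < z)) as [[z [[_ Hz] Hxz]]|Hne].
      * apply Hn. eapply Rle_trans; [apply Hz|]. apply fe_mono; lra.
      * assert (tau <= x); [|lra]. apply Hlub. intros y Hy. destruct (Rle_or_lt y x); auto. exfalso; eauto.
    + apply ex_RInt_ext with (fun _ => 0); [|apply ex_RInt_const].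
      intros x Hx. rewrite Rmin_left in Hx by lra. rewrite Rmax_right in Hx by lra.
      unfold ind. destruct (Rle_dec c (fe x)) as [Hy|]; auto. exfalso.
      assert (x <= tau) by (apply Hub; split; [lra|auto]). lra.
  - apply ex_RInt_ext with (fun _ => 0); [|apply ex_RInt_const].
    intros x _. unfold ind. destruct (Rle_dec c (fe x)); auto. pose proof (fe_bounds x). lra.
Qed.

Lemma mono_ex_RInt_aux : ex_RInt f a b.
Proof.
  set (D := f a - f b).
  assert (HD : 0 <= D) by (unfold D; pose proof (Hmono a b ltac:(lra) ltac:(lra) ltac:(lra)); lra).
  set (dl := fun n : nat => D / (INR n + 1)).
  assert (Hdl : forall n, 0 <= dl n).
  { intros n. unfold dl. apply Rdiv_le_0_compat; auto. pose proof (pos_INR n); lra. }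
  set (g := fun (n : nat) x => f b + dl n * fsum (fun j => ind (f b + INR j * dl n) x) n).
  assert (Hg : forall n x, Rabs (g n x - fe x) <= dl n).
  { intros n x. pose proof (fe_bounds x) as Hfe.
    destruct (Req_dec D 0) as [HD0|HD0].
    - unfold g, dl. rewrite HD0. unfold Rdiv. rewrite Rmult_0_l, Rmult_0_l.
      apply abs_le_intro. unfold D in HD0. lra.
    - assert (Hd : 0 < dl n). { unfold dl. apply Rdiv_lt_0_compat; [lra|]. pose proof (pos_INR n); lra. }
      assert (Hy : 0 <= fe x - f b <= (INR n + 1) * dl n).
      { unfold dl. split; [lra|]. field_simplify; [unfold D; lra|]. pose proof (pos_INR n); lra. }
      pose proof (count_bound n (dl n) (fe x - f b) Hd Hy) as Hc. simpl in Hc.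
      assert (Heq : fsum (fun j => ind (f b + INR j * dl n) x) n =
                    fsum (fun j => if Rle_dec (INR j * dl n) (fe x - f b) then 1 else 0) n).
      { apply fsum_ext. intros k _. unfold ind.
        destruct (Rle_dec (f b + INR k * dl n) (fe x)); destruct (Rle_dec (INR k * dl n) (fe x - f b)); lra. }
      unfold g. rewrite Heq. apply abs_le_intro. nra. }
  assert (Hint : forall n, is_RInt (g n) a b (RInt (g n) a b)).
  { intros n. apply (@RInt_correct R_CompleteNormedModule). unfold g.
    apply (ex_RInt_plus (fun _ => f b) (fun x => dl n * fsum (fun j => ind (f b + INR j * dl n) x) n)).
    apply ex_RInt_const.
    apply (ex_RInt_scal (fun x => fsum (fun j => ind (f b + INR j * dl n) x) n)).
    apply ex_RInt_fsum. intros j. apply ex_RInt_ind. }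
  destruct (filterlim_RInt g a b eventually eventually_filter fe (fun n => RInt (g n) a b) Hint) as [If [_ HIf]].
  - apply filterlim_locally. intros eps.
    destruct (archimed (D / eps)) as [Harch _].
    assert (Hz : (0 <= up (D / eps))%Z).
    { apply le_IZR. assert (0 <= D / eps) by (apply Rdiv_le_0_compat; [lra|apply cond_pos]). simpl. lra. }
    exists (Z.to_nat (up (D / eps))). intros n Hn t.
    change (Rabs (g n t - fe t) < eps).
    eapply Rle_lt_trans; [apply Hg|]. unfold dl.
    apply le_INR in Hn. rewrite INR_IZR_INZ, Z2Nat.id in Hn by auto.
    pose proof (cond_pos eps).
    apply Rmult_lt_reg_r with (INR n + 1); [pose proof (pos_INR n); lra|].
    unfold Rdiv. rewrite Rmult_assoc, Rinv_l, Rmult_1_r; [|pose proof (pos_INR n); lra].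
    apply Rmult_lt_reg_r with (/ eps); [apply Rinv_0_lt_compat; lra|].
    replace (eps * (INR n + 1) * / eps) with (INR n + 1) by (field; lra).
    change (D * / eps) with (D / eps). lra.
  - exists If. apply is_RInt_ext with fe; auto.
    intros x Hx. rewrite Rmin_left in Hx by lra. rewrite Rmax_right in Hx by lra.
    unfold fe. f_equal. unfold Rmin, Rmax; repeat destruct Rle_dec; lra.
Qed.
End Mono.

Lemma mono_ex_RInt f a b : a <= b -> (forall x y, a <= x -> x <= y -> y <= b -> f y <= f x) ->
  ex_RInt f a b.
Proof. intros; apply mono_ex_RInt_aux; auto. Qed.

End P3.
Import P3.

Module P4.

Lemma fsum_lt f g N k0 : (1 <= k0 <= N)%nat -> (forall k, (1 <= k <= N)%nat -> f k <= g k) ->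
  f k0 < g k0 -> fsum f N < fsum g N.
Proof.
  induction N; intros Hk Hle Hlt; [lia|]. simpl.
  destruct (Nat.eq_dec k0 (S N)) as [->|Hne].
  - assert (fsum f N <= fsum g N) by (apply fsum_le; intros; apply Hle; lia). lra.
  - assert (fsum f N < fsum g N) by (apply IHN; auto; [lia|intros; apply Hle; lia]).
    assert (f (S N) <= g (S N)) by (apply Hle; lia). lra.
Qed.

Lemma exp_cvx_lo c y1 y2 : 0 < c -> y1 < y2 -> c * exp (c * y1) * (y2 - y1) < exp (c * y2) - exp (c * y1).
Proof.
  intros Hc Hy. replace (c * y2) with (c * y1 + c * (y2 - y1)) by ring. rewrite exp_plus.
  pose proof (exp_ineq1 (c * (y2 - y1)) ltac:(nra)). pose proof (exp_pos (c * y1)). nra.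
Qed.

Lemma exp_cvx_hi c y1 y2 : 0 < c -> y1 < y2 -> exp (c * y2) - exp (c * y1) < c * exp (c * y2) * (y2 - y1).
Proof.
  intros Hc Hy. replace (c * y1) with (c * y2 + - (c * (y2 - y1))) by ring. rewrite exp_plus.
  pose proof (exp_ineq1 (- (c * (y2 - y1))) ltac:(nra)). pose proof (exp_pos (c * y2)). nra.
Qed.

Lemma is_derive_fsum (F dF : nat -> R -> R) N x :
  (forall k, (1 <= k <= N)%nat -> is_derive (F k) x (dF k x)) ->
  is_derive (fun y => fsum (fun k => F k y) N) x (fsum (fun k => dF k x) N).
Proof.
  induction N; intros H; simpl.
  - apply (is_derive_const 0).
  - apply (is_derive_plus (fun y => fsum (fun k => F k y) N) (F (S N))).
    apply IHN; intros; apply H; lia. apply H; lia.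
Qed.

Lemma continuous_fsum (F : nat -> R -> R) N x :
  (forall k, (1 <= k <= N)%nat -> continuous (F k) x) ->
  continuous (fun y => fsum (fun k => F k y) N) x.
Proof.
  induction N; intros H; simpl.
  - apply continuous_const.
  - apply (continuous_plus (fun y => fsum (fun k => F k y) N) (F (S N))).
    apply IHN; intros; apply H; lia. apply H; lia.
Qed.

End P4.
Import P4.

Module P5.

Section Init.
Variable a : nat -> R.
Variable K : nat.
Hypothesis HK : forall k, (K < k)%nat -> a k = 0.
Hypothesis Ha : forall k, (1 <= k)%nat -> 0 <= a k.
Variable k0 : nat.
Hypothesis Hk0 : (1 <= k0 <= K)%nat.
Hypothesis Hak0 : 0 < a k0.

Definition G u := fsum (fun k => a k * exp (INR k * u)) K.
Definition phi u := fsum (fun k => INR k * a k * exp (INR k * u)) K.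

Lemma INR_pos k : (1 <= k)%nat -> 0 < INR k.
Proof. intros; apply lt_0_INR; lia. Qed.

Lemma G_pos u : 0 < G u.
Proof.
  unfold G. apply Rle_lt_trans with (fsum (fun _ => 0) K). rewrite fsum_zero; lra.
  apply fsum_lt with k0; auto.
  - intros k Hk. pose proof (Ha k ltac:(lia)). pose proof (exp_pos (INR k * u)). nra.
  - pose proof (exp_pos (INR k0 * u)). nra.
Qed.

Lemma phi_pos u : 0 < phi u.
Proof.
  unfold phi. apply Rle_lt_trans with (fsum (fun _ => 0) K). rewrite fsum_zero; lra.
  apply fsum_lt with k0; auto.
  - intros k Hk. pose proof (Ha k ltac:(lia)). pose proof (exp_pos (INR k * u)). pose proof (INR_pos k ltac:(lia)).
    assert (0 <= INR k * a k) by nra. nra.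
  - pose proof (exp_pos (INR k0 * u)). pose proof (INR_pos k0 ltac:(lia)). assert (0 < INR k0 * a k0) by nra. nra.
Qed.

Lemma G_lt u1 u2 : u1 < u2 -> phi u1 * (u2 - u1) < G u2 - G u1 < phi u2 * (u2 - u1).
Proof.
  intros Hu. unfold G, phi. rewrite <- !fsum_minus.
  replace (fsum (fun k => INR k * a k * exp (INR k * u1)) K * (u2 - u1)) with
    (fsum (fun k => INR k * a k * exp (INR k * u1) * (u2 - u1)) K).
  2:{ rewrite Rmult_comm, <- fsum_scal. apply fsum_ext; intros; ring. }
  replace (fsum (fun k => INR k * a k * exp (INR k * u2)) K * (u2 - u1)) with
    (fsum (fun k => INR k * a k * exp (INR k * u2) * (u2 - u1)) K).
  2:{ rewrite Rmult_comm, <- fsum_scal. apply fsum_ext; intros; ring. }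
  split; apply fsum_lt with k0; auto.
  - intros k Hk. pose proof (Ha k ltac:(lia)). pose proof (exp_cvx_lo (INR k) u1 u2 (INR_pos k ltac:(lia)) Hu). nra.
  - pose proof (exp_cvx_lo (INR k0) u1 u2 (INR_pos k0 ltac:(lia)) Hu). nra.
  - intros k Hk. pose proof (Ha k ltac:(lia)). pose proof (exp_cvx_hi (INR k) u1 u2 (INR_pos k ltac:(lia)) Hu). nra.
  - pose proof (exp_cvx_hi (INR k0) u1 u2 (INR_pos k0 ltac:(lia)) Hu). nra.
Qed.

Lemma G_incr u1 u2 : u1 < u2 -> G u1 < G u2.
Proof. intros H. pose proof (G_lt u1 u2 H). pose proof (phi_pos u1). nra. Qed.

Lemma G_le u1 u2 : u1 <= u2 -> G u1 <= G u2.
Proof. intros H. destruct (Req_dec u1 u2); [subst; lra|]. left; apply G_incr; lra. Qed.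

Lemma G_inj_le u1 u2 : G u1 <= G u2 -> u1 <= u2.
Proof. intros H. destruct (Rle_or_lt u1 u2); auto. pose proof (G_incr u2 u1 H0). lra. Qed.

Lemma phi_incr u1 u2 : u1 < u2 -> phi u1 < phi u2.
Proof.
  intros Hu. unfold phi. apply fsum_lt with k0; auto.
  - intros k Hk. pose proof (Ha k ltac:(lia)). pose proof (INR_pos k ltac:(lia)).
    assert (exp (INR k * u1) < exp (INR k * u2)) by (apply exp_increasing; nra).
    assert (0 <= INR k * a k) by nra. nra.
  - pose proof (INR_pos k0 ltac:(lia)).
    assert (exp (INR k0 * u1) < exp (INR k0 * u2)) by (apply exp_increasing; nra).
    assert (0 < INR k0 * a k0) by nra. nra.
Qed.

Lemma phi_le u1 u2 : u1 <= u2 -> phi u1 <= phi u2.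
Proof. intros H. destruct (Req_dec u1 u2); [subst; lra|]. left; apply phi_incr; lra. Qed.

Lemma G_derive u : is_derive G u (phi u).
Proof.
  unfold G, phi. apply (is_derive_fsum (fun k y => a k * exp (INR k * y)) (fun k y => INR k * a k * exp (INR k * y))).
  intros k _. auto_derive; auto. ring.
Qed.

Lemma phi_cont u : continuous phi u.
Proof.
  unfold phi. apply (continuous_fsum (fun k y => INR k * a k * exp (INR k * y))).
  intros k _. apply (@ex_derive_continuous R_AbsRing R_NormedModule). auto_derive; auto.
Qed.

Lemma G_cont u : continuous G u.
Proof. apply (@ex_derive_continuous R_AbsRing R_NormedModule). eexists; apply G_derive. Qed.

Lemma phi_small u : u <= 0 -> phi u <= exp u * phi 0.
Proof.
  intros Hu. unfold phi. rewrite <- fsum_scal. apply fsum_le. intros k Hk.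
  pose proof (Ha k ltac:(lia)). pose proof (INR_pos k ltac:(lia)).
  rewrite Rmult_0_r, exp_0.
  assert (exp (INR k * u) <= exp u).
  { assert (1 <= INR k) by (replace 1 with (INR 1) by reflexivity; apply le_INR; lia).
    assert (0 <= (INR k - 1) * (- u)) by (apply Rmult_le_pos; lra).
    destruct (Req_dec (INR k * u) u) as [E|E]. rewrite E; lra.
    left; apply exp_increasing. nra. }
  assert (0 <= INR k * a k) by nra.
  assert (0 <= INR k * a k * (exp u - exp (INR k * u))) by (apply Rmult_le_pos; lra). nra.
Qed.

Lemma phi_big u : 0 <= u -> INR k0 * a k0 * exp u <= phi u.
Proof.
  intros Hu. unfold phi.
  assert (H1 : INR k0 * a k0 * exp u <= INR k0 * a k0 * exp (INR k0 * u)).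
  { assert (1 <= INR k0) by (replace 1 with (INR 1) by reflexivity; apply le_INR; lia).
    assert (exp u <= exp (INR k0 * u)). { assert (0 <= (INR k0 - 1) * u) by (apply Rmult_le_pos; lra).
      destruct (Req_dec (INR k0 * u) u) as [E|E]. rewrite E; lra. left; apply exp_increasing; nra. }
    pose proof (INR_pos k0 ltac:(lia)). assert (0 <= INR k0 * a k0) by nra. nra. }
  eapply Rle_trans; [apply H1|].
  clear H1. assert (Hg : forall N, (k0 <= N <= K)%nat -> INR k0 * a k0 * exp (INR k0 * u) <= fsum (fun k => INR k * a k * exp (INR k * u)) N).
  { intros N HN. induction N. lia. cbn [fsum]. destruct (Nat.eq_dec k0 (S N)) as [E|Hne].
    - rewrite <- E. assert (0 <= fsum (fun k => INR k * a k * exp (INR k * u)) N).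
      { apply fsum_nonneg. intros k Hk. pose proof (Ha k Hk). pose proof (INR_pos k Hk). pose proof (exp_pos (INR k * u)).
        assert (0 <= INR k * a k) by nra. nra. }
      lra.
    - assert (0 <= INR (S N) * a (S N) * exp (INR (S N) * u)).
      { pose proof (Ha (S N) ltac:(lia)). pose proof (INR_pos (S N) ltac:(lia)). pose proof (exp_pos (INR (S N) * u)).
        assert (0 <= INR (S N) * a (S N)) by nra. nra. }
      pose proof (IHN ltac:(lia)). lra. }
  apply Hg. lia.
Qed.

Lemma cont_pt_of u f : continuous f u -> continuity_pt f u.
Proof. intros H. apply continuity_pt_filterlim. exact H. Qed.

Lemma ustar_ex t : 0 < t -> exists w, t * phi w = 1.
Proof.
  intros Ht.
  set (c0 := INR k0 * a k0).
  assert (Hc0 : 0 < c0) by (unfold c0; pose proof (INR_pos k0 ltac:(lia)); nra).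
  assert (Hp0 := phi_pos 0).
  set (lo := - Rabs (ln (t * phi 0))).
  assert (Hlo : t * phi lo <= 1).
  { assert (lo <= 0) by (unfold lo; pose proof (Rabs_pos (ln (t * phi 0))); lra).
    pose proof (phi_small lo H).
    assert (exp lo <= exp (- ln (t * phi 0))).
    { destruct (Req_dec lo (- ln (t * phi 0))) as [E|E]; [rewrite E; lra|]. left; apply exp_increasing.
      unfold lo in *. pose proof (Rle_abs (ln (t * phi 0))). lra. }
    rewrite exp_Ropp, exp_ln in H1 by nra.
    assert (exp lo * phi 0 <= / (t * phi 0) * phi 0) by (apply Rmult_le_compat_r; lra).
    replace (/ (t * phi 0) * phi 0) with (/ t) in H2 by (field; lra).
    assert (t * phi lo <= t * / t) by (apply Rmult_le_compat_l; lra).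
    rewrite Rinv_r in H3; lra. }
  set (hi := Rabs (ln (/ (t * c0)))).
  assert (Hhi : 1 <= t * phi hi).
  { assert (0 <= hi) by (unfold hi; apply Rabs_pos).
    pose proof (phi_big hi H).
    assert (exp (ln (/ (t * c0))) <= exp hi).
    { destruct (Req_dec hi (ln (/ (t * c0)))) as [E|E]; [rewrite E; lra|]. left; apply exp_increasing.
      unfold hi in *. pose proof (Rle_abs (ln (/ (t * c0)))). lra. }
    rewrite exp_ln in H1 by (apply Rinv_0_lt_compat; nra).
    fold c0 in H0.
    assert (c0 * / (t * c0) <= c0 * exp hi) by (apply Rmult_le_compat_l; lra).
    replace (c0 * / (t * c0)) with (/ t) in H2 by (field; lra).
    assert (t * / t <= t * phi hi) by (apply Rmult_le_compat_l; lra).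
    rewrite Rinv_r in H3; lra. }
  destruct (IVT_gen (fun w => t * phi w) lo hi 1) as [w [_ Hw]].
  - intros x. apply cont_pt_of. apply (continuous_scal_r t phi). apply phi_cont.
  - unfold Rmin, Rmax. destruct (Rle_dec _ _); lra.
  - exists w; exact Hw.
Qed.

Lemma ustar_unique t w1 w2 : t * phi w1 = 1 -> t * phi w2 = 1 -> w1 = w2.
Proof.
  intros H1 H2. destruct (Rtotal_order w1 w2) as [H|[H|H]]; auto; exfalso.
  - pose proof (phi_incr _ _ H). assert (0 < t) by (pose proof (phi_pos w1); nra). nra.
  - pose proof (phi_incr _ _ H). assert (0 < t) by (pose proof (phi_pos w1); nra). nra.
Qed.

End Init.

End P5.
Import P5.

Module P6.

Lemma is_RInt_bound f x y I c eps : x <= y -> is_RInt f x y I ->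
  (forall z, x <= z <= y -> Rabs (f z - c) <= eps) -> Rabs (I - (y - x) * c) <= eps * (y - x).
Proof.
  intros Hxy HI Hb.
  assert (H1 : is_RInt (fun z => f z - c) x y (I - (y - x) * c)).
  { apply (is_RInt_minus f (fun _ => c) x y I ((y - x) * c)); auto. apply (is_RInt_const x y c). }
  assert (H2 : ex_RInt (fun z => f z - c) x y) by (eexists; eauto).
  pose proof (abs_RInt_le_const (fun z => f z - c) x y eps Hxy H2 Hb).
  rewrite (is_RInt_unique _ _ _ _ H1) in H. lra.
Qed.

Lemma is_derive_RD f x d : is_derive f x d -> RD f x d.
Proof.
  intros H eps Heps. apply is_derive_Reals in H.
  destruct (H eps Heps) as [del Hdel]. exists del. split; [apply cond_pos|].
  intros r Hr. specialize (Hdel r ltac:(lra) ltac:(rewrite Rabs_pos_eq; lra)).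
  replace (f (x + r) - f x - r * d) with (r * ((f (x + r) - f x) / r - d)) by (field; lra).
  rewrite Rabs_mult, Rabs_pos_eq by lra. rewrite Rmult_comm. apply Rmult_le_compat_r; lra.
Qed.

Lemma RD_plus f g x df dg : RD f x df -> RD g x dg -> RD (fun y => f y + g y) x (df + dg).
Proof.
  intros Hf Hg eps Heps.
  destruct (Hf (eps/2) ltac:(lra)) as [d1 [Hd1 H1]]. destruct (Hg (eps/2) ltac:(lra)) as [d2 [Hd2 H2]].
  exists (Rmin d1 d2). split; [apply Rmin_pos; auto|]. intros r Hr.
  assert (r < d1) by (pose proof (Rmin_l d1 d2); lra). assert (r < d2) by (pose proof (Rmin_r d1 d2); lra).
  specialize (H1 r ltac:(lra)). specialize (H2 r ltac:(lra)).
  apply abs_le_inv in H1. apply abs_le_inv in H2. apply abs_le_intro. lra.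
Qed.

Lemma RD_scal c f x d : RD f x d -> RD (fun y => c * f y) x (c * d).
Proof.
  intros Hf eps Heps.
  destruct (Hf (eps / (Rabs c + 1))) as [d1 [Hd1 H1]]. apply Rdiv_lt_0_compat; [lra|pose proof (Rabs_pos c); lra].
  exists d1. split; auto. intros r Hr. specialize (H1 r Hr).
  replace (c * f (x + r) - c * f x - r * (c * d)) with (c * (f (x + r) - f x - r * d)) by ring.
  rewrite Rabs_mult. pose proof (Rabs_pos c).
  apply Rle_trans with (Rabs c * (eps / (Rabs c + 1) * r)). apply Rmult_le_compat_l; auto.
  replace (Rabs c * (eps / (Rabs c + 1) * r)) with ((eps * r) * (Rabs c / (Rabs c + 1))) by (field; lra).
  assert (Rabs c / (Rabs c + 1) <= 1). { apply Rmult_le_reg_r with (Rabs c + 1); [lra|]. field_simplify; lra. }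
  assert (0 <= eps * r) by nra. nra.
Qed.

Lemma RD_mult f g x df dg : RD f x df -> RD g x dg -> RD (fun y => f y * g y) x (df * g x + f x * dg).
Proof.
  intros Hf Hg eps Heps.
  set (B := Rabs df + Rabs dg + Rabs (f x) + Rabs (g x) + 1).
  assert (HB : 1 <= B) by (unfold B; pose proof (Rabs_pos df); pose proof (Rabs_pos dg); pose proof (Rabs_pos (f x)); pose proof (Rabs_pos (g x)); lra).
  set (e := Rmin 1 (eps / (4 * B))).
  assert (He : 0 < e) by (apply Rmin_pos; [lra|apply Rdiv_lt_0_compat; lra]).
  assert (He1 : e <= 1) by apply Rmin_l.
  assert (He2 : e <= eps / (4 * B)) by apply Rmin_r.
  assert (He3 : e * (4 * B) <= eps) by (apply Rmult_le_reg_r with (/ (4 * B)); [apply Rinv_0_lt_compat; lra|];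
     rewrite Rmult_assoc, Rinv_r, Rmult_1_r by lra; exact He2).
  destruct (Hf e He) as [d1 [Hd1 H1]]. destruct (Hg e He) as [d2 [Hd2 H2]].
  assert (HeB : 0 < e / (B * B)) by (apply Rdiv_lt_0_compat; nra).
  exists (Rmin (e / (B * B)) (Rmin d1 d2)). split; [repeat apply Rmin_pos; auto|]. intros r Hr.
  assert (Hr1 : r <= e / (B * B)) by (pose proof (Rmin_l (e / (B * B)) (Rmin d1 d2)); lra).
  assert (r < d1) by (pose proof (Rmin_r (e / (B * B)) (Rmin d1 d2)); pose proof (Rmin_l d1 d2); lra).
  assert (r < d2) by (pose proof (Rmin_r (e / (B * B)) (Rmin d1 d2)); pose proof (Rmin_r d1 d2); lra).
  assert (Hr2 : r * (B * B) <= e) by (apply Rmult_le_reg_r with (/ (B * B)); [apply Rinv_0_lt_compat; nra|];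
     rewrite Rmult_assoc, Rinv_r, Rmult_1_r by nra; exact Hr1).
  specialize (H1 r ltac:(lra)). specialize (H2 r ltac:(lra)).
  set (u := f (x + r) - f x - r * df) in *. set (w := g (x + r) - g x - r * dg) in *.
  replace (f (x + r) * g (x + r) - f x * g x - r * (df * g x + f x * dg)) with
    (u * g (x + r) + r * df * (g (x + r) - g x) + f x * w) by (unfold u, w; ring).
  assert (Hdg : Rabs (g (x + r) - g x) <= r * B).
  { replace (g (x + r) - g x) with (w + r * dg) by (unfold w; ring).
    eapply Rle_trans; [apply Rabs_triang|]. rewrite Rabs_mult, (Rabs_pos_eq r) by lra.
    unfold B. pose proof (Rabs_pos df); pose proof (Rabs_pos (f x)); pose proof (Rabs_pos (g x)). nra. }
  assert (Hgx : Rabs (g (x + r)) <= B).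
  { replace (g (x + r)) with (g x + (g (x + r) - g x)) by ring.
    eapply Rle_trans; [apply Rabs_triang|].
    assert (r * B <= 1) by nra.
    unfold B in *. pose proof (Rabs_pos df); pose proof (Rabs_pos dg); pose proof (Rabs_pos (f x)). lra. }
  eapply Rle_trans; [apply Rabs_triang|]. eapply Rle_trans; [apply Rplus_le_compat_r, Rabs_triang|].
  rewrite !Rabs_mult. rewrite (Rabs_pos_eq r) by lra.
  assert (T1 : Rabs u * Rabs (g (x + r)) <= e * r * B) by (apply Rmult_le_compat; auto; apply Rabs_pos).
  assert (T2 : r * Rabs df * Rabs (g (x + r) - g x) <= r * B * (r * B)).
  { apply Rmult_le_compat; auto. pose proof (Rabs_pos df); nra. apply Rabs_pos.
    unfold B. pose proof (Rabs_pos dg); pose proof (Rabs_pos (f x)); pose proof (Rabs_pos (g x)). nra. }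
  assert (T3 : Rabs (f x) * Rabs w <= B * (e * r)).
  { apply Rmult_le_compat; auto; try apply Rabs_pos. unfold B. pose proof (Rabs_pos df); pose proof (Rabs_pos dg); pose proof (Rabs_pos (g x)). lra. }
  assert (r * B * (r * B) <= e * r) by nra.
  nra.
Qed.

Lemma RD_exp f x d : RD f x d -> RD (fun y => exp (f y)) x (d * exp (f x)).
Proof.
  intros Hf eps Heps.
  pose proof (is_derive_exp (f x)) as Hd. apply is_derive_Reals in Hd.
  set (B := Rabs d + 1).
  assert (HB : 1 <= B) by (unfold B; pose proof (Rabs_pos d); lra).
  set (e := Rmin 1 (eps / (2 * B + 2 * exp (f x)))).
  assert (Hpos : 0 < 2 * B + 2 * exp (f x)) by (pose proof (exp_pos (f x)); lra).
  assert (He : 0 < e) by (apply Rmin_pos; [lra|apply Rdiv_lt_0_compat; lra]).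
  assert (He1 : e <= 1) by apply Rmin_l.
  assert (He3 : e * (2 * B + 2 * exp (f x)) <= eps).
  { apply Rmult_le_reg_r with (/ (2 * B + 2 * exp (f x))); [apply Rinv_0_lt_compat; lra|].
    rewrite Rmult_assoc, Rinv_r, Rmult_1_r by lra. apply Rmin_r. }
  destruct (Hd e He) as [de Hde].
  destruct (Hf e He) as [d1 [Hd1 H1]].
  assert (Hde' : 0 < de / (2 * B)) by (apply Rdiv_lt_0_compat; [apply cond_pos|lra]).
  exists (Rmin (de / (2 * B)) d1). split; [apply Rmin_pos; auto|]. intros r Hr.
  assert (Hr1 : r <= de / (2 * B)) by (pose proof (Rmin_l (de / (2 * B)) d1); lra).
  assert (r < d1) by (pose proof (Rmin_r (de / (2 * B)) d1); lra).
  specialize (H1 r ltac:(lra)).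
  set (h := f (x + r) - f x).
  assert (Hh : Rabs (h - r * d) <= e * r) by exact H1.
  assert (Hhb : Rabs h <= r * B).
  { replace h with ((h - r * d) + r * d) by ring. eapply Rle_trans; [apply Rabs_triang|].
    rewrite Rabs_mult, (Rabs_pos_eq r) by lra. unfold B. nra. }
  assert (Hrde : r * B < de).
  { apply Rle_lt_trans with (de / (2 * B) * B). apply Rmult_le_compat_r; lra.
    replace (de / (2 * B) * B) with (de / 2) by (field; lra). pose proof (cond_pos de). lra. }
  assert (Hexp : Rabs (exp (f x + h) - exp (f x) - h * exp (f x)) <= e * Rabs h).
  { destruct (Req_dec h 0) as [E|E].
    - rewrite E, Rplus_0_r. replace (exp (f x) - exp (f x) - 0 * exp (f x)) with 0 by ring. rewrite Rabs_R0. pose proof (Rabs_pos 0); nra.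
    - specialize (Hde h E ltac:(lra)).
      replace (exp (f x + h) - exp (f x) - h * exp (f x)) with (h * ((exp (f x + h) - exp (f x)) / h - exp (f x))) by (field; auto).
      rewrite Rabs_mult. rewrite Rmult_comm. apply Rmult_le_compat_r; [apply Rabs_pos|lra]. }
  replace (exp (f (x + r)) - exp (f x) - r * (d * exp (f x))) with
     ((exp (f x + h) - exp (f x) - h * exp (f x)) + (h - r * d) * exp (f x)) by (unfold h; replace (f x + (f (x + r) - f x)) with (f (x + r)) by ring; ring).
  eapply Rle_trans; [apply Rabs_triang|]. rewrite Rabs_mult, (Rabs_pos_eq (exp (f x))) by (apply Rlt_le, exp_pos).
  assert (e * Rabs h <= e * (r * B)) by (apply Rmult_le_compat_l; lra).
  assert (Rabs (h - r * d) * exp (f x) <= e * r * exp (f x)) by (apply Rmult_le_compat_r; [apply Rlt_le, exp_pos|lra]).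
  nra.
Qed.

End P6.
Import P6.

Module P7.

Section Dyn.
Variable v : R -> nat -> R.
Hypothesis Hsol : critical_solution v.

Definition M t := m0 (v t).
Definition M0 := M 0.

Lemma Hin t : 0 <= t -> in_N (v t).
Proof. destruct Hsol as [H _]. apply H. Qed.

Lemma Heq k t : (1 <= k)%nat -> 0 <= t -> is_RInt (fun s => crit_rhs (v s) k) 0 t (v t k - v 0 k).
Proof. destruct Hsol as [_ [H _]]. apply H. Qed.

Lemma M_mono s t : 0 <= s -> s <= t -> M t <= M s.
Proof. destruct Hsol as [_ [_ [H _]]]. intros. pose proof (H s t H0 H1). unfold M. lra. Qed.

Lemma M_range t : 0 <= t -> 0 < M t <= M0.
Proof. destruct Hsol as [_ [_ [_ H]]]. intros. pose proof (H t H0). unfold M0, M. lra. Qed.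

Lemma v_nonneg t k : 0 <= t -> (1 <= k)%nat -> 0 <= v t k.
Proof. intros Ht Hk. destruct (Hin t Ht) as [H _]. auto. Qed.

Lemma fsum_le_M t N : 0 <= t -> fsum (v t) N <= M t.
Proof. intros Ht. destruct (Hin t Ht) as [H1 H2]. apply series_ge_fsum; auto. Qed.

Lemma v_le_M t k : 0 <= t -> (1 <= k)%nat -> v t k <= M t.
Proof.
  intros Ht Hk. apply Rle_trans with (fsum (v t) k); [|apply fsum_le_M; auto].
  destruct k; [lia|]. simpl. pose proof (fsum_nonneg (v t) k (fun j Hj => v_nonneg t j Ht Hj)). lra.
Qed.

Lemma M0_pos : 0 < M0.
Proof. pose proof (M_range 0 (Rle_refl 0)). lra. Qed.

Lemma v_le_M0 t k : 0 <= t -> (1 <= k)%nat -> 0 <= v t k <= M0.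
Proof. intros. split; [apply v_nonneg; auto|]. eapply Rle_trans; [apply v_le_M; auto|apply M_range; auto]. Qed.

Lemma conv_fsum w k : conv w k = fsum (fun l => w l * w (k - l)%nat) (k - 1).
Proof. unfold conv. apply sum_n_m_fsum. Qed.

Lemma fsum_nonneg_r f N : (forall k, (1 <= k <= N)%nat -> 0 <= f k) -> 0 <= fsum f N.
Proof. intros H. rewrite <- (fsum_zero N). apply fsum_le. auto. Qed.

Lemma fsum_const_le f N c : (forall k, (1 <= k <= N)%nat -> f k <= c) -> fsum f N <= INR N * c.
Proof. intros H. rewrite <- fsum_ones, Rmult_comm, <- fsum_scal. apply fsum_le. intros. rewrite Rmult_1_r. auto. Qed.

Lemma conv_bound t k : 0 <= t -> 0 <= conv (v t) k <= INR k * (M0 * M0).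
Proof.
  intros Ht. rewrite conv_fsum. split.
  - apply fsum_nonneg_r. intros l Hl.
    apply Rmult_le_pos; apply v_nonneg; auto; lia.
  - apply Rle_trans with (INR (k - 1) * (M0 * M0)).
    + apply fsum_const_le. intros l Hl. pose proof (v_le_M0 t l Ht ltac:(lia)). pose proof (v_le_M0 t (k - l) Ht ltac:(lia)).
      apply Rmult_le_compat; tauto.
    + apply Rmult_le_compat_r. pose proof M0_pos; nra. apply le_INR; lia.
Qed.

Definition Ck k := INR k * INR k * (M0 * M0) + INR k * (M0 * M0).

Lemma Ck_nonneg k : 0 <= Ck k.
Proof. unfold Ck. pose proof (pos_INR k). pose proof M0_pos. assert (0 <= M0 * M0) by nra. nra. Qed.

Lemma crit_bound t k : 0 <= t -> Rabs (crit_rhs (v t) k) <= Ck k.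
Proof.
  intros Ht. unfold crit_rhs, Ck. pose proof (conv_bound t k Ht). pose proof (pos_INR k).
  pose proof (M_range t Ht). pose proof M0_pos.
  destruct k as [|k].
  - simpl. replace (0 / 2 * conv (v t) 0 - 0 * v t 0%nat * m0 (v t)) with 0 by (unfold Rdiv; ring). rewrite Rabs_R0. lra.
  - pose proof (v_le_M0 t (S k) Ht ltac:(lia)). fold (M t).
    apply abs_le_intro. split.
    + assert (INR (S k) * v t (S k) * M t <= INR (S k) * (M0 * M0)).
      { rewrite Rmult_assoc. apply Rmult_le_compat_l; auto. apply Rmult_le_compat; lra. }
      assert (0 <= INR (S k) / 2 * conv (v t) (S k)) by (apply Rmult_le_pos; [lra|tauto]).
      assert (0 <= INR (S k) * INR (S k) * (M0 * M0)) by (assert (0 <= M0*M0) by nra; nra). lra.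
    + assert (INR (S k) / 2 * conv (v t) (S k) <= INR (S k) * (INR (S k) * (M0 * M0))).
      { unfold Rdiv. assert (0 <= INR (S k) * INR (S k) * (M0 * M0)) by (assert (0 <= M0*M0) by nra; nra). nra. }
      assert (0 <= INR (S k) * v t (S k) * M t) by (apply Rmult_le_pos; [apply Rmult_le_pos|]; lra).
      assert (0 <= INR (S k) * (M0 * M0)) by (assert (0 <= M0*M0) by nra; nra). nra.
Qed.

Lemma is_RInt_v k s t : (1 <= k)%nat -> 0 <= s -> s <= t ->
  is_RInt (fun x => crit_rhs (v x) k) s t (v t k - v s k).
Proof.
  intros Hk Hs Hst.
  pose proof (Heq k t Hk ltac:(lra)). pose proof (Heq k s Hk Hs).
  apply is_RInt_swap in H0.
  pose proof (is_RInt_Chasles _ s 0 t _ _ H0 H).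
  replace (v t k - v s k) with (plus (opp (v s k - v 0 k)) (v t k - v 0 k)); auto.
  unfold plus, opp; simpl. ring.
Qed.

Lemma v_lip k s t : (1 <= k)%nat -> 0 <= s -> s <= t -> Rabs (v t k - v s k) <= Ck k * (t - s).
Proof.
  intros Hk Hs Hst. pose proof (is_RInt_v k s t Hk Hs Hst) as H.
  pose proof (is_RInt_bound _ s t _ 0 (Ck k) Hst H) as Hb.
  rewrite Rmult_0_r, Rminus_0_r in Hb. apply Hb. intros z Hz. rewrite Rminus_0_r. apply crit_bound. lra.
Qed.

Lemma v_lip' k s t : (1 <= k)%nat -> 0 <= s -> 0 <= t -> Rabs (v t k - v s k) <= Ck k * Rabs (t - s).
Proof.
  intros Hk Hs Ht. destruct (Rle_or_lt s t).
  - rewrite (Rabs_pos_eq (t - s)) by lra. apply v_lip; auto.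
  - rewrite <- Rabs_Ropp, (Rabs_left (t - s)) by lra. replace (- (v t k - v s k)) with (v s k - v t k) by ring.
    replace (- (t - s)) with (s - t) by ring. apply v_lip; auto; lra.
Qed.

Lemma fsum_v_lip N s t : 0 <= s -> 0 <= t ->
  Rabs (fsum (v t) N - fsum (v s) N) <= fsum Ck N * Rabs (t - s).
Proof.
  intros Hs Ht. rewrite <- fsum_minus. eapply Rle_trans; [apply fsum_abs_le|].
  rewrite Rmult_comm, <- fsum_scal. apply fsum_le. intros k Hk. rewrite Rmult_comm. apply v_lip'; auto; lia.
Qed.

Lemma M_rc t : 0 <= t -> forall eps, 0 < eps -> exists delta, 0 < delta /\
  forall y, t <= y < t + delta -> Rabs (M y - M t) <= eps.
Proof.
  intros Ht eps Heps.
  destruct (Hin t Ht) as [Hp Hex].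
  destruct (series_fsum_lim (v t) Hex (eps/2) ltac:(lra)) as [N HN].
  specialize (HN N (le_n _)). apply Rabs_def2 in HN.
  set (L := fsum Ck N + 1).
  assert (HL : 0 < L) by (unfold L; pose proof (fsum_nonneg Ck N (fun k _ => Ck_nonneg k)); lra).
  exists (eps / (2 * L)). split; [apply Rdiv_lt_0_compat; lra|]. intros y Hy.
  pose proof (fsum_v_lip N t y Ht ltac:(lra)) as Hl.
  rewrite (Rabs_pos_eq (y - t)) in Hl by lra.
  assert (fsum Ck N * (y - t) <= eps / 2).
  { apply Rle_trans with (L * (y - t)). apply Rmult_le_compat_r; unfold L; lra.
    apply Rle_trans with (L * (eps / (2 * L))). apply Rmult_le_compat_l; lra. right; field; lra. }
  apply abs_le_inv in Hl. pose proof (fsum_le_M y N ltac:(lra)). pose proof (M_mono t y Ht ltac:(lra)).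
  unfold M, m0 in *. apply abs_le_intro. lra.
Qed.

End Dyn.

End P7.
Import P7.

Module P8.

Lemma lip_cont f x L : 0 <= L -> (forall y, Rabs (f y - f x) <= L * Rabs (y - x)) -> continuous f x.
Proof.
  intros HL H. apply continuity_pt_filterlim. intros eps Heps.
  exists (eps / (L + 1)). split; [apply Rdiv_lt_0_compat; lra|].
  intros y [_ Hy]. simpl in *. unfold R_dist in *.
  eapply Rle_lt_trans; [apply H|].
  apply Rle_lt_trans with (L * (eps / (L + 1))). apply Rmult_le_compat_l; lra.
  apply Rmult_lt_reg_r with (L + 1); [lra|]. field_simplify; nra.
Qed.

Lemma cont_eps f x : continuous f x -> forall eps, 0 < eps -> exists delta, 0 < delta /\
  forall y, Rabs (y - x) < delta -> Rabs (f y - f x) < eps.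
Proof.
  intros H eps Heps. apply continuity_pt_filterlim in H. destruct (H eps Heps) as [d [Hd Hy]].
  exists d. split; auto. intros y Hyd. destruct (Req_dec y x) as [E|E].
  - subst. rewrite Rminus_diag, Rabs_R0. lra.
  - apply (Hy y). split; [split; [exact I|auto]|exact Hyd].
Qed.

Lemma Rmax0_lip x y : Rabs (Rmax 0 y - Rmax 0 x) <= Rabs (y - x).
Proof. unfold Rmax. repeat destruct Rle_dec; apply abs_le_intro; unfold Rabs; destruct Rcase_abs; lra. Qed.

Section Dyn2.
Variable v : R -> nat -> R.
Hypothesis Hsol : critical_solution v.
Local Notation M := (M v).
Local Notation M0 := (M0 v).
Local Notation Ck := (Ck v).

Lemma Ck_mono l k : (l <= k)%nat -> Ck l <= Ck k.
Proof.
  intros H. unfold P7.Ck. apply le_INR in H. pose proof (pos_INR l). pose proof (M0_pos v Hsol).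
  assert (0 <= M0 * M0) by nra. fold M0.
  assert (INR l * INR l <= INR k * INR k) by (apply Rmult_le_compat; lra).
  assert (INR l * INR l * (M0 * M0) <= INR k * INR k * (M0 * M0)) by (apply Rmult_le_compat_r; lra).
  assert (INR l * (M0 * M0) <= INR k * (M0 * M0)) by (apply Rmult_le_compat_r; lra). lra.
Qed.

Lemma conv_lip k s y : 0 <= s -> 0 <= y ->
  Rabs (conv (v y) k - conv (v s) k) <= INR k * (2 * M0 * Ck k) * Rabs (y - s).
Proof.
  intros Hs Hy. rewrite !conv_fsum, <- fsum_minus.
  eapply Rle_trans; [apply fsum_abs_le|].
  apply Rle_trans with (INR (k - 1) * (2 * M0 * Ck k * Rabs (y - s))).
  - apply fsum_const_le. intros l Hl.
    pose proof (v_le_M0 v Hsol y l Hy ltac:(lia)). pose proof (v_le_M0 v Hsol s (k - l) Hs ltac:(lia)).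
    pose proof (v_lip' v Hsol l s y ltac:(lia) Hs Hy). pose proof (v_lip' v Hsol (k - l) s y ltac:(lia) Hs Hy).
    pose proof (Ck_mono l k ltac:(lia)). pose proof (Ck_mono (k - l) k ltac:(lia)).
    replace (v y l * v y (k - l)%nat - v s l * v s (k - l)%nat) with
      (v y l * (v y (k - l)%nat - v s (k - l)%nat) + v s (k - l)%nat * (v y l - v s l)) by ring.
    eapply Rle_trans; [apply Rabs_triang|]. rewrite !Rabs_mult.
    rewrite (Rabs_pos_eq (v y l)) by tauto. rewrite (Rabs_pos_eq (v s (k - l)%nat)) by tauto.
    pose proof (Rabs_pos (y - s)). pose proof (Ck_nonneg v Hsol (k - l)). pose proof (Ck_nonneg v Hsol l).
    assert (v y l * Rabs (v y (k - l)%nat - v s (k - l)%nat) <= M0 * (Ck k * Rabs (y - s))).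
    { apply Rmult_le_compat; try tauto; try apply Rabs_pos. eapply Rle_trans; [eauto|]. apply Rmult_le_compat_r; auto. }
    assert (v s (k - l)%nat * Rabs (v y l - v s l) <= M0 * (Ck k * Rabs (y - s))).
    { apply Rmult_le_compat; try tauto; try apply Rabs_pos. eapply Rle_trans; [eauto|]. apply Rmult_le_compat_r; auto. }
    lra.
  - pose proof (Rabs_pos (y - s)). pose proof (Ck_nonneg v Hsol k). pose proof (M0_pos v Hsol).
    assert (INR (k - 1) <= INR k) by (apply le_INR; lia).
    assert (0 <= 2 * M0 * Ck k * Rabs (y - s)) by (repeat apply Rmult_le_pos; lra).
    rewrite <- !Rmult_assoc. rewrite (Rmult_assoc (INR k)), (Rmult_assoc (INR k * (2 * M0))).
    replace (INR k * (2 * M0) * (Ck k * Rabs (y - s))) with (INR k * (2 * M0 * Ck k * Rabs (y - s))) by ring.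
    replace (INR (k - 1) * 2 * M0 * Ck k * Rabs (y - s)) with (INR (k - 1) * (2 * M0 * Ck k * Rabs (y - s))) by ring.
    apply Rmult_le_compat_r; auto.
Qed.

Lemma crit_rc k t : 0 <= t -> forall eps, 0 < eps -> exists delta, 0 < delta /\
  forall y, t <= y < t + delta -> Rabs (crit_rhs (v y) k - crit_rhs (v t) k) <= eps.
Proof.
  intros Ht eps Heps.
  destruct k as [|k].
  - exists 1. split; [lra|]. intros y Hy. unfold crit_rhs. simpl.
    replace (0 / 2 * conv (v y) 0 - 0 * v y 0%nat * m0 (v y) - (0 / 2 * conv (v t) 0 - 0 * v t 0%nat * m0 (v t))) with 0 by (unfold Rdiv; ring).
    rewrite Rabs_R0; lra.
  - set (kk := S k).
    pose proof (M0_pos v Hsol) as HM0.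
    set (L := INR kk * (2 * M0 * Ck kk) * INR kk + INR kk * M0 * Ck kk + 1).
    assert (HL : 0 < L).
    { unfold L. pose proof (pos_INR kk). pose proof (Ck_nonneg v Hsol kk). assert (0 <= INR kk * (2 * M0 * Ck kk) * INR kk) by (repeat apply Rmult_le_pos; lra).
      assert (0 <= INR kk * M0 * Ck kk) by (repeat apply Rmult_le_pos; lra). lra. }
    destruct (M_rc v Hsol t Ht (eps / (2 * (INR kk * M0 + 1)))) as [d1 [Hd1 H1]].
    { apply Rdiv_lt_0_compat; [lra|]. pose proof (pos_INR kk). nra. }
    exists (Rmin d1 (eps / (2 * L))). split; [apply Rmin_pos; auto; apply Rdiv_lt_0_compat; lra|].
    intros y Hy.
    assert (Hy1 : y - t < d1) by (pose proof (Rmin_l d1 (eps / (2 * L))); lra).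
    assert (Hy2 : y - t <= eps / (2 * L)) by (pose proof (Rmin_r d1 (eps / (2 * L))); lra).
    specialize (H1 y ltac:(lra)).
    pose proof (conv_lip kk t y Ht ltac:(lra)) as Hc.
    pose proof (v_lip v Hsol kk t y ltac:(unfold kk; lia) Ht ltac:(lra)) as Hv.
    rewrite (Rabs_pos_eq (y - t)) in Hc by lra.
    pose proof (v_le_M0 v Hsol y kk ltac:(lra) ltac:(unfold kk; lia)) as Hvy.
    pose proof (M_range v Hsol t Ht) as HMt.
    unfold crit_rhs. fold (P7.M v y). fold (P7.M v t). fold kk.
    replace (INR kk / 2 * conv (v y) kk - INR kk * v y kk * M y - (INR kk / 2 * conv (v t) kk - INR kk * v t kk * M t))
      with (INR kk / 2 * (conv (v y) kk - conv (v t) kk) - INR kk * (v y kk * (M y - M t)) - INR kk * M t * (v y kk - v t kk)) by ring.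
    pose proof (pos_INR kk).
    apply Rle_trans with (INR kk / 2 * (INR kk * (2 * M0 * Ck kk) * (y - t)) + INR kk * (M0 * (eps / (2 * (INR kk * M0 + 1)))) + INR kk * M0 * (Ck kk * (y - t))).
    + eapply Rle_trans; [apply Rabs_triang|]. eapply Rle_trans; [apply Rplus_le_compat_r, Rabs_triang|].
      rewrite !Rabs_Ropp, !Rabs_mult. rewrite (Rabs_pos_eq (INR kk / 2)) by lra. rewrite (Rabs_pos_eq (INR kk)) by lra.
      rewrite (Rabs_pos_eq (v y kk)) by tauto. try rewrite (Rabs_pos_eq (M t)) by lra.
      apply Rplus_le_compat; [apply Rplus_le_compat|].
      * apply Rmult_le_compat_l; lra.
      * apply Rmult_le_compat_l; auto. apply Rmult_le_compat; try tauto; try apply Rabs_pos.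
      * apply Rmult_le_compat; [apply Rmult_le_pos; lra|apply Rabs_pos|apply Rmult_le_compat_l; lra|lra].
    + assert (Ht1 : INR kk * (M0 * (eps / (2 * (INR kk * M0 + 1)))) <= eps / 2).
      { replace (INR kk * (M0 * (eps / (2 * (INR kk * M0 + 1))))) with ((eps / 2) * (INR kk * M0 / (INR kk * M0 + 1))) by (field; nra).
        assert (INR kk * M0 / (INR kk * M0 + 1) <= 1). { apply Rmult_le_reg_r with (INR kk * M0 + 1); [nra|]. field_simplify; nra. }
        assert (0 <= INR kk * M0 / (INR kk * M0 + 1)) by (apply Rdiv_le_0_compat; nra). nra. }
      assert (Ht2 : INR kk / 2 * (INR kk * (2 * M0 * Ck kk) * (y - t)) + INR kk * M0 * (Ck kk * (y - t)) <= L * (y - t)).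
      { unfold L. pose proof (Ck_nonneg v Hsol kk). assert (0 <= y - t) by lra.
        assert (0 <= INR kk * M0 * Ck kk) by (repeat apply Rmult_le_pos; lra).
        assert (0 <= INR kk * INR kk * M0 * Ck kk) by (repeat apply Rmult_le_pos; lra).
        replace (INR kk / 2 * (INR kk * (2 * M0 * Ck kk) * (y - t)) + INR kk * M0 * (Ck kk * (y - t))) with
          ((INR kk * INR kk * M0 * Ck kk + INR kk * M0 * Ck kk) * (y - t)) by field.
        apply Rmult_le_compat_r; auto. lra. }
      assert (L * (y - t) <= eps / 2). { apply Rle_trans with (L * (eps / (2 * L))). apply Rmult_le_compat_l; lra. right; field; lra. }
      lra.
Qed.

Lemma v_RD k t : (1 <= k)%nat -> 0 <= t -> RD (fun s => v s k) t (crit_rhs (v t) k).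
Proof.
  intros Hk Ht eps Heps. destruct (crit_rc k t Ht eps Heps) as [d [Hd H]].
  exists d. split; auto. intros r Hr.
  pose proof (is_RInt_v v Hsol k t (t + r) Hk Ht ltac:(lra)) as HI.
  pose proof (is_RInt_bound _ t (t + r) _ (crit_rhs (v t) k) eps ltac:(lra) HI) as Hb.
  replace (t + r - t) with r in Hb by ring. apply Hb. intros z Hz. apply H. lra.
Qed.

Definition A t := RInt M 0 t.

Lemma M_ex_RInt s t : 0 <= s -> s <= t -> ex_RInt M s t.
Proof. intros Hs Hst. apply mono_ex_RInt; auto. intros x y Hx Hxy Hy. apply (M_mono v Hsol); lra. Qed.

Lemma A_diff s t : 0 <= s -> s <= t -> A t - A s = RInt M s t.
Proof.
  intros Hs Hst. unfold A. rewrite <- (RInt_Chasles M 0 s t).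
  - change (plus (RInt M 0 s) (RInt M s t)) with (RInt M 0 s + RInt M s t). ring.
  - apply M_ex_RInt; lra.
  - apply M_ex_RInt; lra.
Qed.

Lemma A0 : A 0 = 0.
Proof. unfold A. rewrite RInt_point. reflexivity. Qed.

Lemma A_bounds s t : 0 <= s -> s <= t -> (t - s) * M t <= A t - A s <= (t - s) * M s.
Proof.
  intros Hs Hst. rewrite A_diff by auto. split.
  - replace ((t - s) * M t) with (RInt (fun _ => M t) s t) by (rewrite RInt_const; reflexivity). apply RInt_le; auto. apply ex_RInt_const. apply M_ex_RInt; auto.
    intros x Hx. apply (M_mono v Hsol); lra.
  - replace ((t - s) * M s) with (RInt (fun _ => M s) s t) by (rewrite RInt_const; reflexivity). apply RInt_le; auto. apply M_ex_RInt; auto. apply ex_RInt_const.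
    intros x Hx. apply (M_mono v Hsol); lra.
Qed.

Lemma A_RD t : 0 <= t -> RD A t (M t).
Proof.
  intros Ht eps Heps. destruct (M_rc v Hsol t Ht eps Heps) as [d [Hd H]].
  exists d. split; auto. intros r Hr.
  rewrite A_diff by lra.
  pose proof (RInt_correct M t (t + r) (M_ex_RInt t (t + r) Ht ltac:(lra))) as HI.
  pose proof (is_RInt_bound _ t (t + r) _ (M t) eps ltac:(lra) HI) as Hb.
  replace (t + r - t) with r in Hb by ring. apply Hb. intros z Hz. apply H. lra.
Qed.

Lemma A_lip s t : 0 <= s -> 0 <= t -> Rabs (A t - A s) <= M0 * Rabs (t - s).
Proof.
  intros Hs Ht. pose proof (M_range v Hsol s Hs). pose proof (M_range v Hsol t Ht).
  destruct (Rle_or_lt s t).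
  - pose proof (A_bounds s t Hs H1). rewrite !Rabs_pos_eq by nra. nra.
  - pose proof (A_bounds t s Ht ltac:(lra)). rewrite <- Rabs_Ropp, (Rabs_left (t - s)) by lra.
    rewrite Rabs_pos_eq by nra. nra.
Qed.

End Dyn2.

End P8.
Import P8.

Module P9.

Lemma RD_d_eq f x d d' : RD f x d -> d = d' -> RD f x d'.
Proof. intros H ->; auto. Qed.

Lemma RD_ext_right f g t d : (forall r, 0 <= r -> f (t + r) = g (t + r)) -> RD g t d -> RD f t d.
Proof.
  intros He H eps Heps. destruct (H eps Heps) as [del [Hd Hr]]. exists del; split; auto.
  intros r Hr'. rewrite He by lra. replace (f t) with (g t). apply Hr; auto.
  pose proof (He 0 (Rle_refl 0)). rewrite Rplus_0_r in H0. auto.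
Qed.

Lemma cont_LC h a x : continuous h x -> LC h a x.
Proof.
  intros H eps Heps. destruct (cont_eps h x H eps Heps) as [d [Hd Hy]].
  exists d. split; auto. intros y Hy1 Hy2. left. apply Hy. apply Rabs_def1; lra.
Qed.

Section Dyn3.
Variable v : R -> nat -> R.
Hypothesis Hsol : critical_solution v.
Local Notation M := (M v).
Local Notation M0 := (M0 v).
Local Notation Ck := (Ck v).
Local Notation A := (A v).

Definition Ac y := A (Rmax 0 y).
Definition vc k y := v (Rmax 0 y) k.
Definition bc k y := exp (INR k * Ac y) * vc k y.
Definition gb k y := INR k / 2 * conv (fun l => bc l y) k.

Lemma Rmax0_pos y : 0 <= Rmax 0 y.
Proof. apply Rmax_l. Qed.
Lemma Rmax0_id y : 0 <= y -> Rmax 0 y = y.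
Proof. intros; apply Rmax_right; auto. Qed.

Lemma Ac_cont x : continuous Ac x.
Proof.
  apply lip_cont with M0. pose proof (M0_pos v Hsol); lra.
  intros y. unfold Ac. eapply Rle_trans. apply (A_lip v Hsol); apply Rmax0_pos.
  apply Rmult_le_compat_l. pose proof (M0_pos v Hsol); lra. apply Rmax0_lip.
Qed.

Lemma vc_cont k x : (1 <= k)%nat -> continuous (vc k) x.
Proof.
  intros Hk. apply lip_cont with (Ck k). apply Ck_nonneg; auto.
  intros y. unfold vc. eapply Rle_trans. apply (v_lip' v Hsol); auto; apply Rmax0_pos.
  apply Rmult_le_compat_l. apply Ck_nonneg; auto. apply Rmax0_lip.
Qed.

Lemma bc_cont k x : (1 <= k)%nat -> continuous (bc k) x.
Proof.
  intros Hk. unfold bc. apply (continuous_mult (fun y => exp (INR k * Ac y)) (vc k)).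
  - apply continuous_exp_comp. apply (continuous_scal_r (INR k) Ac). apply Ac_cont.
  - apply vc_cont; auto.
Qed.

Lemma gb_cont k x : continuous (gb k) x.
Proof.
  unfold gb. apply (continuous_scal_r (INR k / 2) (fun y => conv (fun l => bc l y) k)).
  assert (Hc : continuous (fun y => fsum (fun l => bc l y * bc (k - l)%nat y) (k - 1)) x).
  { apply (continuous_fsum (fun l y => bc l y * bc (k - l)%nat y)). intros l Hl.
    apply (continuous_mult (bc l) (bc (k - l)%nat)); apply bc_cont; lia. }
  eapply continuous_ext; [|exact Hc]. intros y. simpl. rewrite conv_fsum. reflexivity.
Qed.

Lemma bc_nonneg k y : (1 <= k)%nat -> 0 <= bc k y.
Proof. intros Hk. unfold bc, vc. apply Rmult_le_pos. apply Rlt_le, exp_pos. apply (v_nonneg v Hsol); auto. apply Rmax0_pos. Qed.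

Lemma gb_nonneg k y : 0 <= gb k y.
Proof.
  unfold gb. apply Rmult_le_pos. pose proof (pos_INR k); lra. rewrite conv_fsum. apply fsum_nonneg_r.
  intros l Hl. apply Rmult_le_pos; apply bc_nonneg; lia.
Qed.

Lemma conv_b_eq k t : 0 <= t -> conv (fun l => bc l t) k = exp (INR k * A t) * conv (v t) k.
Proof.
  intros Ht. rewrite !conv_fsum, <- fsum_scal. apply fsum_ext. intros l Hl.
  unfold bc, vc, Ac. rewrite Rmax0_id by auto.
  replace (exp (INR k * A t)) with (exp (INR l * A t) * exp (INR (k - l) * A t)).
  ring. rewrite <- exp_plus. f_equal. rewrite minus_INR by lia. ring.
Qed.

Lemma bc_RD k t : (1 <= k)%nat -> 0 <= t -> RD (bc k) t (gb k t).
Proof.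
  intros Hk Ht.
  apply RD_ext_right with (fun s => exp (INR k * A s) * v s k).
  { intros r Hr. unfold bc, vc, Ac. rewrite Rmax0_id by lra. reflexivity. }
  eapply RD_d_eq.
  - apply (RD_mult (fun s => exp (INR k * A s)) (fun s => v s k)).
    + apply (RD_exp (fun s => INR k * A s)). apply (RD_scal (INR k) A). apply (A_RD v Hsol); auto.
    + apply (v_RD v Hsol); auto.
  - unfold gb. rewrite conv_b_eq by auto. unfold crit_rhs. fold (P7.M v t). ring.
Qed.

Lemma RInt_gb_derive k x : is_derive (RInt (gb k) 0) x (gb k x).
Proof.
  apply (is_derive_RInt (gb k) (RInt (gb k) 0) 0 x).
  - exists (mkposreal 1 Rlt_0_1). intros y _. apply (@RInt_correct R_CompleteNormedModule).
    apply (@ex_RInt_continuous R_CompleteNormedModule). intros; apply gb_cont.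
  - apply gb_cont.
Qed.

Lemma b_int k t : (1 <= k)%nat -> 0 <= t -> bc k t = bc k 0 + RInt (gb k) 0 t.
Proof.
  intros Hk Ht.
  set (h := fun s => bc k s - RInt (gb k) 0 s).
  assert (h t = h 0).
  { apply rd_const; auto.
    - intros x Hx. apply cont_LC. unfold h.
      apply (continuous_minus (bc k) (RInt (gb k) 0)). apply bc_cont; auto.
      apply (@ex_derive_continuous R_AbsRing R_NormedModule). eexists. apply RInt_gb_derive.
    - intros x Hx. unfold h. eapply RD_d_eq.
      + apply (RD_plus (bc k) (fun s => - RInt (gb k) 0 s)). apply bc_RD; auto; lra.
        apply is_derive_RD. apply (is_derive_opp (RInt (gb k) 0)). apply RInt_gb_derive.
      + simpl. change (opp (gb k x)) with (- gb k x). ring. }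
  unfold h in H. assert (RInt (gb k) 0 0 = 0) by (rewrite RInt_point; reflexivity). lra.
Qed.

Lemma bc_derive k s : (1 <= k)%nat -> 0 < s -> is_derive (bc k) s (gb k s).
Proof.
  intros Hk Hs.
  apply is_derive_ext_loc with (fun y => bc k 0 + RInt (gb k) 0 y).
  - exists (mkposreal s Hs). intros y Hy. simpl in Hy. unfold ball in Hy; simpl in Hy. unfold AbsRing_ball, abs, minus, plus, opp in Hy; simpl in Hy.
    symmetry. apply b_int; auto. apply Rabs_def2 in Hy. lra.
  - eapply is_derive_ext. intros y; reflexivity.
    replace (gb k s) with (0 + gb k s) by ring.
    apply (is_derive_plus (fun _ => bc k 0) (RInt (gb k) 0)). apply (is_derive_const (bc k 0)). apply RInt_gb_derive.
Qed.

Lemma bc0 k : bc k 0 = v 0 k.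
Proof. unfold bc, Ac, vc. rewrite Rmax0_id by lra. rewrite (A0 v). rewrite Rmult_0_r, exp_0. ring. Qed.

Lemma bc_v k t : 0 <= t -> bc k t * exp (- (INR k * A t)) = v t k.
Proof. intros Ht. unfold bc, Ac, vc. rewrite Rmax0_id by auto. rewrite (Rmult_comm (exp _)), Rmult_assoc, <- exp_plus.
  replace (INR k * A t + - (INR k * A t)) with 0 by ring. rewrite exp_0. ring. Qed.

Lemma bc_mono k s t : (1 <= k)%nat -> 0 <= s -> s <= t -> bc k s <= bc k t.
Proof.
  intros Hk Hs Hst. rewrite (b_int k t), (b_int k s) by (auto; lra).
  assert (RInt (gb k) 0 s <= RInt (gb k) 0 t); [|lra].
  assert (Hex : forall a b, ex_RInt (gb k) a b) by (intros; apply (@ex_RInt_continuous R_CompleteNormedModule); intros; apply gb_cont).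
  rewrite <- (RInt_Chasles (gb k) 0 s t) by auto.
  change (plus (RInt (gb k) 0 s) (RInt (gb k) s t)) with (RInt (gb k) 0 s + RInt (gb k) s t).
  assert (0 <= RInt (gb k) s t) by (apply RInt_ge_0; auto; intros; apply gb_nonneg). lra.
Qed.

End Dyn3.

End P9.
Import P9.

Module P10.

Lemma fsum_shift f n : fsum f (S n) = f 1%nat + fsum (fun l => f (S l)) n.
Proof. induction n; simpl in *; [lra|]. rewrite IHn. simpl. lra. Qed.

Lemma fsum_rev f n : fsum f n = fsum (fun l => f (S n - l)%nat) n.
Proof.
  revert f. induction n; intros f; [reflexivity|].
  rewrite fsum_shift. cbn [fsum]. replace (S (S n) - S n)%nat with 1%nat by lia.
  rewrite (IHn (fun l => f (S l))). rewrite Rplus_comm. f_equal.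
  apply fsum_ext. intros k Hk. f_equal. lia.
Qed.

Lemma fsum_fsum_tri (F : nat -> nat -> R) N :
  fsum (fun k => fsum (fun l => F l (k - l)%nat) (k - 1)) N =
  fsum (fun l => fsum (fun m => F l m) (N - l)) N.
Proof.
  induction N; [reflexivity|].
  cbn [fsum]. rewrite IHN. replace (S N - 1)%nat with N by lia.
  replace (S N - S N)%nat with 0%nat by lia. cbn [fsum]. rewrite Rplus_0_r.
  assert (fsum (fun l => fsum (fun m => F l m) (S N - l)) N =
          fsum (fun l => fsum (fun m => F l m) (N - l) + F l (S N - l)%nat) N).
  { apply fsum_ext. intros l Hl. replace (S N - l)%nat with (S (N - l)) by lia. cbn [fsum]. replace (S (N - l)) with (S N - l)%nat by lia. reflexivity. }
  rewrite H, fsum_plus. ring.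
Qed.

Lemma fsum_mult_l c f N : fsum f N * c = fsum (fun k => f k * c) N.
Proof. rewrite Rmult_comm, <- fsum_scal. apply fsum_ext; intros; ring. Qed.

Definition Tsum (b : nat -> R) N := fsum (fun k => INR k / 2 * fsum (fun l => b l * b (k - l)%nat) (k - 1)) N.

Lemma Tsum_eq b N : Tsum b N = fsum (fun l => b l * fsum (fun m => INR m * b m) (N - l)) N.
Proof.
  unfold Tsum.
  transitivity (fsum (fun k => fsum (fun l => b l * (INR (k - l) * b (k - l)%nat)) (k - 1)) N).
  - apply fsum_ext. intros k Hk.
    set (S1 := fsum (fun l => b l * (INR (k - l) * b (k - l)%nat)) (k - 1)).
    assert (Hrev : S1 = fsum (fun l => INR l * b l * b (k - l)%nat) (k - 1)).
    { unfold S1. rewrite fsum_rev. apply fsum_ext. intros l Hl. replace (S (k - 1) - l)%nat with (k - l)%nat by lia.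
      replace (k - (k - l))%nat with l by lia. ring. }
    assert (Hsum : S1 + S1 = INR k * fsum (fun l => b l * b (k - l)%nat) (k - 1)).
    { rewrite Hrev at 2. unfold S1. rewrite <- fsum_plus, <- fsum_scal. apply fsum_ext. intros l Hl.
      rewrite minus_INR by lia. ring. }
    lra.
  - rewrite (fsum_fsum_tri (fun l m => b l * (INR m * b m))). apply fsum_ext. intros l Hl.
    rewrite <- fsum_scal. reflexivity.
Qed.

Lemma fsum_tail_le g h n N : (n <= N)%nat -> (forall m, (n < m <= N)%nat -> g m <= h m) ->
  fsum g N - fsum g n <= fsum h N - fsum h n.
Proof.
  intros Hn. induction Hn; intros H; [lra|]. cbn [fsum].
  assert (g (S m) <= h (S m)) by (apply H; lia).
  assert (fsum g m - fsum g n <= fsum h m - fsum h n) by (apply IHHn; intros; apply H; lia). lra.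
Qed.

Lemma fsum_tail_nonneg g n N : (n <= N)%nat -> (forall m, (1 <= m)%nat -> 0 <= g m) -> 0 <= fsum g N - fsum g n.
Proof. intros. pose proof (fsum_mono g n N H0 H). lra. Qed.

Section Double.
Variables b gam : nat -> R.
Variable del : R.
Hypothesis Hdel : 0 < del.
Hypothesis Hb : forall k, (1 <= k)%nat -> 0 <= b k.
Hypothesis Hbg : forall k, (1 <= k)%nat -> b k <= gam k * exp (- (INR k * del)).

Lemma gam_nonneg k : (1 <= k)%nat -> 0 <= gam k.
Proof. intros Hk. pose proof (Hb k Hk). pose proof (Hbg k Hk). pose proof (exp_pos (- (INR k * del))). nra. Qed.

Lemma Tsum_le N : Tsum b N <= fsum b N * fsum (fun m => INR m * b m) N.
Proof.
  rewrite Tsum_eq, fsum_mult_l. apply fsum_le. intros l Hl. apply Rmult_le_compat_l; [apply Hb; lia|].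
  apply fsum_mono; [|lia]. intros m Hm. pose proof (pos_INR m). pose proof (Hb m Hm). nra.
Qed.

Definition epsN N := exp (- (INR N * del / 2)) / (1 - exp (- (del / 2))).

Lemma jexp_bound j : INR j * exp (- (INR j * del)) <= exp (- (INR j * del / 2)) / (1 - exp (- (del / 2))).
Proof.
  set (s := exp (- (del / 2))).
  assert (Hs0 : 0 < s) by apply exp_pos.
  assert (Hs1 : s < 1) by (unfold s; rewrite <- exp_0; apply exp_increasing; lra).
  assert (Hpow : forall i, exp (- (INR i * del / 2)) = s ^ i).
  { intros i. induction i. simpl. rewrite Rmult_0_l. unfold Rdiv. rewrite Rmult_0_l, Ropp_0, exp_0. reflexivity.
    rewrite S_INR. simpl. rewrite <- IHi. unfold s. rewrite <- exp_plus. f_equal. field. }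
  assert (Hsq : exp (- (INR j * del)) = s ^ j * s ^ j).
  { rewrite <- !Hpow, <- exp_plus. f_equal. field. }
  rewrite Hsq, Hpow.
  assert (Hj : INR j * s ^ j <= / (1 - s)).
  { (* j s^j <= sum_{i<j} s^i <= 1/(1-s) *)
    assert (H1 : forall n, INR n * s ^ n <= sum_f_R0 (fun i => s ^ i) n - s ^ n).
    { induction n. simpl. lra. rewrite S_INR. simpl (s ^ S n). simpl (sum_f_R0 (fun i => s ^ i) (S n)).
      assert (0 <= s ^ n) by (apply pow_le; lra).
      assert (INR n * (s * s ^ n) <= INR n * s ^ n) by (pose proof (pos_INR n); apply Rmult_le_compat_l; nra).
      assert (s * s ^ n <= s ^ n) by nra. lra. }
    pose proof (H1 j). rewrite tech3 in H by lra.
    assert (0 <= s ^ S j) by (apply pow_le; lra). assert (0 <= s ^ j) by (apply pow_le; lra).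
    assert ((1 - s ^ S j) / (1 - s) <= / (1 - s)).
    { unfold Rdiv. rewrite <- (Rmult_1_l (/ (1 - s))) at 2. apply Rmult_le_compat_r. left; apply Rinv_0_lt_compat; lra. lra. }
    lra. }
  assert (0 <= s ^ j) by (apply pow_le; lra).
  replace (INR j * (s ^ j * s ^ j)) with (s ^ j * (INR j * s ^ j)) by ring.
  unfold Rdiv. apply Rmult_le_compat_l; auto.
Qed.

Lemma epsN_mono j N : (N <= j)%nat -> exp (- (INR j * del / 2)) / (1 - exp (- (del / 2))) <= epsN N.
Proof.
  intros H. unfold epsN. unfold Rdiv. apply Rmult_le_compat_r.
  - left. apply Rinv_0_lt_compat. assert (exp (- (del / 2)) < 1) by (rewrite <- exp_0; apply exp_increasing; lra). lra.
  - apply le_INR in H. destruct (Req_dec (INR j) (INR N)) as [E|E]. rewrite E; lra.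
    left; apply exp_increasing. nra.
Qed.

Lemma epsN_nonneg N : 0 <= epsN N.
Proof.
  unfold epsN. apply Rdiv_le_0_compat. apply Rlt_le, exp_pos.
  assert (exp (- (del / 2)) < 1) by (rewrite <- exp_0; apply exp_increasing; lra). lra.
Qed.

Lemma Tsum_gap N : fsum b N * fsum (fun m => INR m * b m) N - Tsum b N <= epsN N * (fsum gam N * fsum gam N).
Proof.
  rewrite Tsum_eq, fsum_mult_l, <- fsum_minus.
  set (g := fun m => INR m * b m).
  replace (epsN N * (fsum gam N * fsum gam N)) with (fsum (fun l => epsN N * gam l * fsum gam N) N).
  2:{ rewrite fsum_mult_l. rewrite <- fsum_scal. apply fsum_ext; intros; ring. }
  apply fsum_le. intros l Hl.
  replace (b l * fsum g N - b l * fsum g (N - l)) with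
    (fsum (fun m => b l * g m) N - fsum (fun m => b l * g m) (N - l)) by (rewrite !fsum_scal; ring).
  apply Rle_trans with (fsum (fun m => epsN N * gam l * gam m) N - fsum (fun m => epsN N * gam l * gam m) (N - l)).
  - apply fsum_tail_le; [lia|]. intros m Hm. unfold g.
    pose proof (Hb l ltac:(lia)). pose proof (Hb m ltac:(lia)). pose proof (Hbg l ltac:(lia)). pose proof (Hbg m ltac:(lia)).
    pose proof (gam_nonneg l ltac:(lia)). pose proof (gam_nonneg m ltac:(lia)). pose proof (pos_INR m).
    apply Rle_trans with (gam l * gam m * (INR m * (exp (- (INR l * del)) * exp (- (INR m * del))))).
    { replace (gam l * gam m * (INR m * (exp (- (INR l * del)) * exp (- (INR m * del))))) with
        ((gam l * exp (- (INR l * del))) * (INR m * (gam m * exp (- (INR m * del))))) by ring.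
      apply Rmult_le_compat; auto. apply Rmult_le_pos; auto. apply Rmult_le_compat_l; auto. }
    replace (epsN N * gam l * gam m) with (gam l * gam m * epsN N) by ring.
    apply Rmult_le_compat_l; [apply Rmult_le_pos; auto|].
    rewrite <- exp_plus. replace (- (INR l * del) + - (INR m * del)) with (- (INR (l + m) * del)) by (rewrite plus_INR; ring).
    apply Rle_trans with (INR (l + m) * exp (- (INR (l + m) * del))).
    + apply Rmult_le_compat_r. apply Rlt_le, exp_pos. apply le_INR; lia.
    + eapply Rle_trans; [apply jexp_bound|]. apply epsN_mono. lia.
  - assert (0 <= fsum (fun m => epsN N * gam l * gam m) (N - l)).
    { apply fsum_nonneg. intros m Hm. pose proof (epsN_nonneg N). pose proof (gam_nonneg l ltac:(lia)). pose proof (gam_nonneg m Hm).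
      apply Rmult_le_pos; [apply Rmult_le_pos|]; auto. }
    rewrite fsum_scal. lra.
Qed.

End Double.

End P10.
Import P10.

Module P11.

Section Char.
Variable v : R -> nat -> R.
Hypothesis Hsol : critical_solution v.
Variable K : nat.
Hypothesis HK : forall k, (K < k)%nat -> v 0 k = 0.

Local Notation bc := (bc v).
Local Notation gb := (gb v).
Local Notation G := (G (fun k => v 0 k) K).

Definition xs w s := - w + s * G w.
Definition ee k w s := exp (- (INR k * xs w s)).
Definition Yc N w s := fsum (fun k => bc k s * ee k w s) N.
Definition Dn N w s := fsum (fun k => INR k * (bc k s * ee k w s)) N.
Definition Rn N w s := Yc N w s * Dn N w s - Tsum (fun k => bc k s * ee k w s) N.

Lemma ee_split k l w s : (l <= k)%nat -> ee k w s = ee l w s * ee (k - l) w s.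
Proof. intros H. unfold ee. rewrite <- exp_plus. f_equal. rewrite minus_INR by auto. ring. Qed.

Lemma ee_derive k w s : is_derive (ee k w) s (ee k w s * (- (INR k * G w))).
Proof. unfold ee, xs. auto_derive; auto. ring. Qed.

Lemma ee_cont k w s : continuous (ee k w) s.
Proof. apply (@ex_derive_continuous R_AbsRing R_NormedModule). eexists; apply ee_derive. Qed.

Lemma Yc_cont N w s : continuous (Yc N w) s.
Proof.
  unfold Yc. apply (continuous_fsum (fun k s => bc k s * ee k w s)). intros k Hk.
  apply (continuous_mult (bc k) (ee k w)). apply (bc_cont v Hsol); lia. apply ee_cont.
Qed.

Lemma Dn_cont N w s : continuous (Dn N w) s.
Proof.
  unfold Dn. apply (continuous_fsum (fun k s => INR k * (bc k s * ee k w s))). intros k Hk.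
  apply (continuous_scal_r (INR k) (fun s => bc k s * ee k w s)).
  apply (continuous_mult (bc k) (ee k w)). apply (bc_cont v Hsol); lia. apply ee_cont.
Qed.

Lemma Yc_derive N w s : 0 < s ->
  is_derive (Yc N w) s (Tsum (fun k => bc k s * ee k w s) N - G w * Dn N w s).
Proof.
  intros Hs. unfold Yc.
  eapply is_derive_ext. intros y; reflexivity.
  assert (H := is_derive_fsum (fun k s => bc k s * ee k w s)
     (fun k s => gb k s * ee k w s + bc k s * (ee k w s * (- (INR k * G w)))) N s).
  replace (Tsum (fun k => bc k s * ee k w s) N - G w * Dn N w s) with
    (fsum (fun k => gb k s * ee k w s + bc k s * (ee k w s * (- (INR k * G w)))) N).
  - apply H. intros k Hk.
    apply (is_derive_mult (bc k) (ee k w)). apply (bc_derive v Hsol); auto; lia. apply ee_derive.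
    intros; apply Rmult_comm.
  - rewrite fsum_plus.
    assert (E2 : fsum (fun k => bc k s * (ee k w s * - (INR k * G w))) N = - (G w * Dn N w s)).
    { unfold Dn. rewrite <- fsum_scal. replace (- fsum (fun k => G w * (INR k * (bc k s * ee k w s))) N) with
        ((-1) * fsum (fun k => G w * (INR k * (bc k s * ee k w s))) N) by ring. rewrite <- fsum_scal.
      apply fsum_ext. intros; ring. }
    assert (E1 : fsum (fun k => gb k s * ee k w s) N = Tsum (fun k => bc k s * ee k w s) N).
    { unfold Tsum. apply fsum_ext. intros k Hk.
      unfold gb. rewrite conv_fsum. rewrite Rmult_assoc. f_equal. rewrite fsum_mult_l.
      apply fsum_ext. intros l Hl. rewrite (ee_split k l) by lia. ring. }
    rewrite E1, E2. ring.
Qed.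

Definition Ef N w s := exp (- RInt (Dn N w) 0 s).

Lemma RInt_Dn_derive N w x : is_derive (RInt (Dn N w) 0) x (Dn N w x).
Proof.
  apply (is_derive_RInt (Dn N w) (RInt (Dn N w) 0) 0 x).
  - exists (mkposreal 1 Rlt_0_1). intros y _. apply (@RInt_correct R_CompleteNormedModule).
    apply (@ex_RInt_continuous R_CompleteNormedModule). intros; apply Dn_cont.
  - apply Dn_cont.
Qed.

Lemma Ef_derive N w x : is_derive (Ef N w) x (- Dn N w x * Ef N w x).
Proof.
  unfold Ef. apply (is_derive_comp exp (fun s => - RInt (Dn N w) 0 s)).
  - apply is_derive_exp.
  - apply (is_derive_opp (RInt (Dn N w) 0)). apply RInt_Dn_derive.
Qed.

Lemma Dn_nonneg N w s : 0 <= Dn N w s.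
Proof.
  unfold Dn. apply fsum_nonneg. intros k Hk. apply Rmult_le_pos. apply pos_INR.
  apply Rmult_le_pos. apply (bc_nonneg v Hsol); auto. apply Rlt_le, exp_pos.
Qed.

Lemma Yc_nonneg N w s : 0 <= Yc N w s.
Proof.
  unfold Yc. apply fsum_nonneg. intros k Hk.
  apply Rmult_le_pos. apply (bc_nonneg v Hsol); auto. apply Rlt_le, exp_pos.
Qed.

Lemma Rn_nonneg N w s : 0 <= Rn N w s.
Proof.
  unfold Rn, Yc, Dn.
  assert (Tsum (fun k => bc k s * ee k w s) N <= fsum (fun k => bc k s * ee k w s) N * fsum (fun m => INR m * (bc m s * ee m w s)) N).
  { apply Tsum_le. intros k Hk. apply Rmult_le_pos. apply (bc_nonneg v Hsol); auto. apply Rlt_le, exp_pos. }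
  lra.
Qed.

Lemma Yc0 N w : Yc N w 0 <= G w.
Proof.
  unfold Yc, P5.G.
  assert (E : fsum (fun k => bc k 0 * ee k w 0) N = fsum (fun k => v 0 k * exp (INR k * w)) N).
  { apply fsum_ext. intros k Hk. rewrite (bc0 v). unfold ee, xs. f_equal. f_equal. ring. }
  rewrite E. destruct (Nat.le_gt_cases N K).
  - apply fsum_mono; auto. intros k Hk. apply Rmult_le_pos. apply (v_nonneg v Hsol); auto; lra. apply Rlt_le, exp_pos.
  - right. clear E. induction H; [cbn [fsum]; rewrite HK by lia; ring|]. cbn [fsum]. rewrite HK by lia. lra.
Qed.
Lemma Yc0_eq N w : (K <= N)%nat -> Yc N w 0 = G w.
Proof.
  intros HN. unfold Yc, P5.G.
  assert (E : fsum (fun k => bc k 0 * ee k w 0) N = fsum (fun k => v 0 k * exp (INR k * w)) N).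
  { apply fsum_ext. intros k Hk. rewrite (bc0 v). unfold ee, xs. f_equal. f_equal. ring. }
  rewrite E. clear E. induction HN; auto. cbn [fsum]. rewrite HK by lia. lra.
Qed.

End Char.

End P11.
Import P11.

Module P12.

Section Char2.
Variable v : R -> nat -> R.
Hypothesis Hsol : critical_solution v.
Variable K : nat.
Hypothesis HK : forall k, (K < k)%nat -> v 0 k = 0.

Local Notation bc := (bc v).
Local Notation G := (G (fun k => v 0 k) K).
Local Notation Yc := (Yc v K).
Local Notation Dn := (Dn v K).
Local Notation Rn := (Rn v K).
Local Notation Ef := (Ef v K).

Lemma Ef_pos N w s : 0 < Ef N w s.
Proof. apply exp_pos. Qed.

Lemma Ef0 N w : Ef N w 0 = 1.
Proof. unfold P11.Ef. assert (RInt (Dn N w) 0 0 = 0) by (rewrite RInt_point; reflexivity). rewrite H, Ropp_0. apply exp_0. Qed.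

Lemma Dn_ex_RInt N w a b : ex_RInt (Dn N w) a b.
Proof. apply (@ex_RInt_continuous R_CompleteNormedModule). intros; apply Dn_cont; auto. Qed.

Lemma RInt_Dn_bounds N w s Db : 0 <= s -> (forall c, 0 <= c <= s -> Dn N w c <= Db) ->
  0 <= RInt (Dn N w) 0 s <= s * Db.
Proof.
  intros Hs HD. split.
  - apply RInt_ge_0; auto. apply Dn_ex_RInt. intros; apply Dn_nonneg; auto.
  - replace (s * Db) with (RInt (fun _ => Db) 0 s) by (rewrite RInt_const; simpl; unfold scal; simpl; unfold mult; simpl; ring).
    apply RInt_le; auto. apply Dn_ex_RInt. apply ex_RInt_const. intros; apply HD; lra.
Qed.

Let f N w s := Ef N w s * (Yc N w s - G w).

Lemma f_derive N w c : 0 < c -> is_derive (f N w) c (- Ef N w c * Rn N w c).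
Proof.
  intros Hc. unfold f.
  eapply is_derive_ext. intros y; reflexivity.
  assert (H2 : is_derive (fun s => Yc N w s - G w) c (Tsum (fun k => bc k c * ee v K k w c) N - G w * Dn N w c)).
  { replace (Tsum (fun k => bc k c * ee v K k w c) N - G w * Dn N w c) with
      (minus (Tsum (fun k => bc k c * ee v K k w c) N - G w * Dn N w c) 0) by (unfold minus, plus, opp; simpl; ring).
    apply (is_derive_minus (Yc N w) (fun _ => G w)). apply Yc_derive; auto. apply (is_derive_const (G w)). }
  pose proof (is_derive_mult (Ef N w) (fun s => Yc N w s - G w) c _ _ (Ef_derive v Hsol K N w c) H2 Rmult_comm) as H.
  replace (- Ef N w c * Rn N w c) with
    (plus (mult (- Dn N w c * Ef N w c) (Yc N w c - G w)) (mult (Ef N w c) (Tsum (fun k => bc k c * ee v K k w c) N - G w * Dn N w c))).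
  exact H. unfold plus, mult; simpl. unfold P11.Rn, P11.Yc. fold (Yc N w c). ring_simplify. unfold P11.Dn. ring.
Qed.

Lemma f_cont N w x : continuity_pt (f N w) x.
Proof.
  apply continuity_pt_filterlim. unfold f.
  apply (continuous_mult (Ef N w) (fun s => Yc N w s - G w)).
  - apply (@ex_derive_continuous R_AbsRing R_NormedModule). eexists; apply Ef_derive; auto.
  - apply (continuous_minus (Yc N w) (fun _ => G w)). apply Yc_cont; auto. apply continuous_const.
Qed.

Lemma f_mvt N w s : 0 < s -> exists c, 0 <= c <= s /\ f N w s - f N w 0 = - Ef N w c * Rn N w c * s.
Proof.
  intros Hs. destruct (MVT_gen (f N w) 0 s (fun c => - Ef N w c * Rn N w c)) as [c [Hc Heq]].
  - intros x Hx. rewrite Rmin_left in Hx by lra. apply f_derive. lra.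
  - intros x _. apply f_cont.
  - rewrite Rmin_left, Rmax_right in Hc by lra. exists c. split; auto. rewrite Heq. ring.
Qed.

Lemma char_S N w s : 0 <= s -> Yc N w s <= G w.
Proof.
  intros Hs. destruct (Req_dec s 0) as [->|Hs0]. apply Yc0; auto.
  destruct (f_mvt N w s ltac:(lra)) as [c [Hc Heq]].
  unfold f in Heq. rewrite Ef0 in Heq. pose proof (Yc0 v Hsol K HK N w).
  pose proof (Ef_pos N w c). pose proof (Rn_nonneg v Hsol K N w c). pose proof (Ef_pos N w s).
  assert (0 <= Ef N w c * Rn N w c * s) by (repeat apply Rmult_le_pos; lra).
  assert (Ef N w s * (Yc N w s - G w) <= 0) by lra.
  destruct (Rle_or_lt (Yc N w s) (G w)); auto.
  assert (0 < Ef N w s * (Yc N w s - G w)) by (apply Rmult_lt_0_compat; lra). lra.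
Qed.

Lemma char_lower N w s Rb Db : 0 < s -> (K <= N)%nat ->
  (forall c, 0 <= c <= s -> Rn N w c <= Rb) -> (forall c, 0 <= c <= s -> Dn N w c <= Db) ->
  G w - s * Rb * exp (s * Db) <= Yc N w s.
Proof.
  intros Hs HN HR HD.
  destruct (f_mvt N w s Hs) as [c [Hc Heq]].
  unfold f in Heq. rewrite Ef0, (Yc0_eq v K HK N w HN) in Heq.
  pose proof (Ef_pos N w c). pose proof (Rn_nonneg v Hsol K N w c). pose proof (Ef_pos N w s).
  assert (Hb : 0 <= Rb) by (specialize (HR c Hc); lra).
  assert (HEc : Ef N w c <= 1).
  { unfold P11.Ef. rewrite <- exp_0. destruct (RInt_Dn_bounds N w c (Db) ltac:(lra) ltac:(intros; apply HD; lra)) as [HH _].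
    destruct HH as [HH|HH]. left; apply exp_increasing; lra. rewrite <- HH. rewrite Ropp_0. lra. }
  assert (HEs : exp (- (s * Db)) <= Ef N w s).
  { unfold P11.Ef. destruct (RInt_Dn_bounds N w s (Db) ltac:(lra) HD) as [_ HH].
    destruct HH as [HH|HH]. left; apply exp_increasing; lra. rewrite HH. lra. }
  assert (Hprod : Ef N w s * (Yc N w s - G w) >= - (Rb * s)).
  { specialize (HR c Hc). assert (Ef N w c * Rn N w c <= 1 * Rb) by (apply Rmult_le_compat; lra). nra. }
  destruct (Rle_or_lt (G w) (Yc N w s)) as [Hle|Hlt].
  - assert (0 <= s * Rb * exp (s * Db)) by (apply Rmult_le_pos; [nra|apply Rlt_le, exp_pos]). lra.
  - (* (G - Yc) * Ef <= Rb s, Ef >= exp(-sDb) *)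
    assert ((G w - Yc N w s) * exp (- (s * Db)) <= Rb * s) by nra.
    assert (Hexp : exp (- (s * Db)) * exp (s * Db) = 1) by (rewrite <- exp_plus; replace (- (s * Db) + s * Db) with 0 by ring; apply exp_0).
    assert ((G w - Yc N w s) * exp (- (s * Db)) * exp (s * Db) <= Rb * s * exp (s * Db)) by (apply Rmult_le_compat_r; [apply Rlt_le, exp_pos|lra]).
    rewrite Rmult_assoc, Hexp, Rmult_1_r in H3. lra.
Qed.

End Char2.

End P12.
Import P12.

Module P13.

Lemma exp_neg_small d eta : 0 < d -> 0 < eta -> exists N0, forall N, (N0 <= N)%nat -> exp (- (INR N * d)) <= eta.
Proof.
  intros Hd He.
  destruct (archimed (/ (eta * d))) as [Harch _].
  assert (Hz : (0 <= up (/ (eta * d)))%Z).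
  { apply le_IZR. assert (0 < / (eta * d)) by (apply Rinv_0_lt_compat; nra). simpl. lra. }
  exists (Z.to_nat (up (/ (eta * d)))). intros N HN.
  apply le_INR in HN. rewrite INR_IZR_INZ, Z2Nat.id in HN by auto.
  assert (Hx : / eta <= INR N * d).
  { apply Rle_trans with (/ (eta * d) * d). right. field. split; lra.
    apply Rmult_le_compat_r; lra. }
  pose proof (exp_ineq1_le (INR N * d)).
  assert (0 < exp (INR N * d)) by apply exp_pos.
  rewrite exp_Ropp. assert (/ eta <= exp (INR N * d)) by lra.
  assert (/ eta > 0) by (apply Rinv_0_lt_compat; lra).
  replace eta with (/ / eta) by (field; lra). apply Rinv_le_contravar; lra.
Qed.

Lemma exp_le_1 x : 0 <= x -> exp (- x) <= 1.
Proof. intros H. rewrite <- exp_0. destruct H as [H|H]. left; apply exp_increasing; lra. subst. rewrite Ropp_0. lra. Qed.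

Section Conv.
Variable v : R -> nat -> R.
Hypothesis Hsol : critical_solution v.
Variable K : nat.
Hypothesis HK : forall k, (K < k)%nat -> v 0 k = 0.
Variable k0 : nat.
Hypothesis Hk0 : (1 <= k0 <= K)%nat.
Hypothesis Hak0 : 0 < v 0 k0.

Local Notation a := (fun k => v 0 k).
Lemma Ha : forall k, (1 <= k)%nat -> 0 <= a k.
Proof. intros k Hk. apply (v_nonneg v Hsol); auto; lra. Qed.

Local Notation bc := (bc v).
Local Notation G := (G a K).
Local Notation phi := (phi a K).
Local Notation Yc := (Yc v K).
Local Notation Dn := (Dn v K).
Local Notation Rn := (Rn v K).

Lemma char_conv t w c : 0 < t -> w < c -> t * phi c <= 1 ->
  forall eps, 0 < eps -> exists N0, forall N, (N0 <= N)%nat -> G w - eps <= Yc N w t.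
Proof.
  intros Ht Hwc Hc eps Heps.
  destruct (G_lt a K Ha k0 Hk0 Hak0 w c Hwc) as [HG1 HG2].
  set (del := (c - w) - t * (G c - G w)).
  assert (Hdel : 0 < del).
  { unfold del. assert (t * (G c - G w) < t * (phi c * (c - w))) by (apply Rmult_lt_compat_l; lra). nra. }
  assert (HGcw : 0 <= G c - G w) by (pose proof (phi_pos a K Ha k0 Hk0 Hak0 w); nra).
  set (q := exp (- (del / 2))).
  assert (Hq0 : 0 < q) by apply exp_pos.
  assert (Hq1 : q < 1) by (unfold q; rewrite <- exp_0; apply exp_increasing; lra).
  set (Db := G c / (1 - q)).
  assert (HGc : 0 < G c) by apply (G_pos a K Ha k0 Hk0 Hak0).
  assert (Hbeta : forall s k, 0 <= s <= t -> (1 <= k)%nat ->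
     bc k s * ee v K k w s <= (bc k s * ee v K k c s) * exp (- (INR k * del))).
  { intros s k Hs Hk. rewrite Rmult_assoc. apply Rmult_le_compat_l. apply (bc_nonneg v Hsol); auto.
    unfold ee, xs. rewrite <- exp_plus.
    assert (s * (G c - G w) <= t * (G c - G w)) by (apply Rmult_le_compat_r; lra).
    assert (Hin : - (INR k * (- w + s * G w)) <= - (INR k * (- c + s * G c)) + - (INR k * del)).
    { pose proof (pos_INR k). unfold del.
      assert (0 <= INR k * ((c - w) - s * (G c - G w) - ((c - w) - t * (G c - G w)))) by (apply Rmult_le_pos; lra).
      nra. }
    destruct Hin as [Hin|Hin]. left; apply exp_increasing; auto. rewrite Hin; lra. }
  assert (Hgam : forall s N, 0 <= s <= t -> fsum (fun k => bc k s * ee v K k c s) N <= G c).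
  { intros s N Hs. apply (char_S v Hsol K HK). lra. }
  assert (Hgam0 : forall s N, 0 <= s <= t -> 0 <= fsum (fun k => bc k s * ee v K k c s) N).
  { intros s N Hs. apply fsum_nonneg. intros k Hk. apply Rmult_le_pos. apply (bc_nonneg v Hsol); auto. apply Rlt_le, exp_pos. }
  assert (HR : forall N s, 0 <= s <= t -> Rn N w s <= epsN del N * (G c * G c)).
  { intros N s Hs. unfold P11.Rn, P11.Yc, P11.Dn.
    eapply Rle_trans.
    - apply (Tsum_gap (fun k => bc k s * ee v K k w s) (fun k => bc k s * ee v K k c s) del Hdel).
      + intros k Hk. apply Rmult_le_pos. apply (bc_nonneg v Hsol); auto. apply Rlt_le, exp_pos.
      + intros k Hk. apply Hbeta; auto.
    - apply Rmult_le_compat_l. apply epsN_nonneg; auto.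
      apply Rmult_le_compat; auto. }
  assert (HD : forall N s, 0 <= s <= t -> Dn N w s <= Db).
  { intros N s Hs. unfold P11.Dn, Db.
    apply Rle_trans with (fsum (fun k => bc k s * ee v K k c s) N / (1 - q)).
    - unfold Rdiv. rewrite fsum_mult_l. apply fsum_le. intros k Hk.
      pose proof (Hbeta s k Hs ltac:(lia)).
      pose proof (jexp_bound del Hdel k). fold q in H0.
      assert (exp (- (INR k * del / 2)) <= 1).
      { apply exp_le_1. pose proof (pos_INR k). assert (0 <= INR k * del) by nra. lra. }
      assert (INR k * exp (- (INR k * del)) <= / (1 - q)).
      { eapply Rle_trans; [apply H0|]. unfold Rdiv. rewrite <- (Rmult_1_l (/ (1 - q))) at 2. apply Rmult_le_compat_r; [left; apply Rinv_0_lt_compat; lra|lra]. }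
      assert (0 <= bc k s * ee v K k c s) by (apply Rmult_le_pos; [apply (bc_nonneg v Hsol); lia|apply Rlt_le, exp_pos]).
      pose proof (pos_INR k).
      apply Rle_trans with (INR k * (bc k s * ee v K k c s * exp (- (INR k * del)))). apply Rmult_le_compat_l; auto.
      replace (INR k * (bc k s * ee v K k c s * exp (- (INR k * del)))) with ((bc k s * ee v K k c s) * (INR k * exp (- (INR k * del)))) by ring.
      apply Rmult_le_compat_l; auto.
    - unfold Rdiv. apply Rmult_le_compat_r. left; apply Rinv_0_lt_compat; lra. apply Hgam; auto. }
  set (C := t * (G c * G c) * exp (t * Db) / (1 - q) + 1).
  assert (HC : 0 < C).
  { unfold C. assert (0 <= t * (G c * G c) * exp (t * Db) / (1 - q)); [|lra].
    apply Rdiv_le_0_compat; [|lra]. repeat apply Rmult_le_pos; try lra; try nra. apply Rlt_le, exp_pos. }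
  destruct (exp_neg_small (del / 2) (eps / C) ltac:(lra) ltac:(apply Rdiv_lt_0_compat; lra)) as [N1 HN1].
  exists (Nat.max N1 K). intros N HN.
  pose proof (char_lower v Hsol K HK N w t (epsN del N * (G c * G c)) Db Ht ltac:(lia)
    (fun c0 Hc0 => HR N c0 Hc0) (fun c0 Hc0 => HD N c0 Hc0)) as Hlow.
  assert (HeN : epsN del N <= (eps / C) / (1 - q)).
  { unfold epsN. fold q. unfold Rdiv. apply Rmult_le_compat_r. left; apply Rinv_0_lt_compat; lra.
    replace (- (INR N * del * / 2)) with (- (INR N * (del / 2))) by (unfold Rdiv; ring). apply HN1. lia. }
  assert (t * (epsN del N * (G c * G c)) * exp (t * Db) <= eps).
  { apply Rle_trans with (t * ((eps / C) / (1 - q) * (G c * G c)) * exp (t * Db)).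
    - apply Rmult_le_compat_r. apply Rlt_le, exp_pos. apply Rmult_le_compat_l. lra.
      apply Rmult_le_compat_r. nra. auto.
    - replace (t * (eps / C / (1 - q) * (G c * G c)) * exp (t * Db)) with
        (eps * ((t * (G c * G c) * exp (t * Db) / (1 - q)) / C)) by (field; lra).
      rewrite <- (Rmult_1_r eps) at 2. apply Rmult_le_compat_l. lra.
      assert (HX : 0 <= t * (G c * G c) * exp (t * Db) / (1 - q)).
      { apply Rdiv_le_0_compat; [|lra]. repeat apply Rmult_le_pos; try lra; try nra. apply Rlt_le, exp_pos. }
      unfold C. set (X := t * (G c * G c) * exp (t * Db) / (1 - q)) in *.
      apply Rmult_le_reg_r with (X + 1). lra. unfold Rdiv. rewrite Rmult_assoc, Rinv_l by lra. lra. }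
  lra.
Qed.

End Conv.

End P13.
Import P13.

Module P14.

Lemma le_of_cont_left f c B : continuous f c -> (forall y, y < c -> f y <= B) -> f c <= B.
Proof.
  intros Hc H. destruct (Rle_or_lt (f c) B) as [|Hlt]; auto. exfalso.
  destruct (cont_eps f c Hc (f c - B) ltac:(lra)) as [d [Hd Hy]].
  specialize (Hy (c - d / 2)). assert (Rabs (c - d / 2 - c) < d) by (rewrite Rabs_left; lra).
  specialize (Hy H0). apply Rabs_def2 in Hy. specialize (H (c - d / 2) ltac:(lra)). lra.
Qed.

Lemma one_minus_exp z : 0 <= z -> 1 - exp (- z) <= z.
Proof. intros. pose proof (exp_ineq1_le (- z)). lra. Qed.

Section Main.
Variable v : R -> nat -> R.
Hypothesis Hsol : critical_solution v.
Variable K : nat.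
Hypothesis HK : forall k, (K < k)%nat -> v 0 k = 0.
Variable k0 : nat.
Hypothesis Hk0 : (1 <= k0 <= K)%nat.
Hypothesis Hak0 : 0 < v 0 k0.

Local Notation a := (fun k => v 0 k).
Local Notation bc := (bc v).
Local Notation G := (G a K).
Local Notation phi := (phi a K).
Local Notation Yc := (Yc v K).
Local Notation M := (M v).
Local Notation A := (A v).

Let Ha := Ha v Hsol.

Definition Yx N s x := fsum (fun k => bc k s * exp (- (INR k * x))) N.

Lemma Yc_Yx N w s : Yc N w s = Yx N s (xs v K w s).
Proof. reflexivity. Qed.

Lemma Yx_v N t : 0 <= t -> Yx N t (A t) = fsum (v t) N.
Proof. intros Ht. unfold Yx. apply fsum_ext. intros k Hk. apply (bc_v v); auto. Qed.

Lemma Yx_anti N s x1 x2 : x1 <= x2 -> Yx N s x2 <= Yx N s x1.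
Proof.
  intros H. unfold Yx. apply fsum_le. intros k Hk. apply Rmult_le_compat_l. apply (bc_nonneg v Hsol); lia.
  pose proof (pos_INR k). assert (INR k * x1 <= INR k * x2) by (apply Rmult_le_compat_l; lra).
  destruct (Req_dec (INR k * x1) (INR k * x2)) as [E|E]. rewrite E; lra. left; apply exp_increasing; lra.
Qed.

Lemma Yx_lip N s x0 x1 x2 : x0 < x1 -> x1 <= x2 ->
  Yx N s x1 - Yx N s x2 <= (x2 - x1) / (1 - exp (- ((x1 - x0) / 2))) * Yx N s x0.
Proof.
  intros H01 H12. set (d := x1 - x0). set (q := exp (- (d / 2))).
  assert (Hq : q < 1) by (unfold q; rewrite <- exp_0; apply exp_increasing; unfold d; lra).
  assert (Hq0 : 0 < q) by apply exp_pos.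
  unfold Yx. rewrite <- fsum_minus. unfold Rdiv. rewrite Rmult_assoc, <- fsum_scal, <- fsum_scal.
  apply fsum_le. intros k Hk.
  pose proof (bc_nonneg v Hsol k s ltac:(lia)) as Hb. pose proof (pos_INR k) as Hk'.
  assert (H1 : exp (- (INR k * x1)) - exp (- (INR k * x2)) <= INR k * (x2 - x1) * exp (- (INR k * x1))).
  { replace (- (INR k * x2)) with (- (INR k * x1) + - (INR k * (x2 - x1))) by ring. rewrite exp_plus.
    pose proof (one_minus_exp (INR k * (x2 - x1)) ltac:(apply Rmult_le_pos; lra)). pose proof (exp_pos (- (INR k * x1))). nra. }
  assert (H2 : INR k * exp (- (INR k * x1)) <= / (1 - q) * exp (- (INR k * x0))).
  { replace (- (INR k * x1)) with (- (INR k * d) + - (INR k * x0)) by (unfold d; ring). rewrite exp_plus.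
    rewrite <- Rmult_assoc. apply Rmult_le_compat_r. apply Rlt_le, exp_pos.
    eapply Rle_trans. apply (jexp_bound d ltac:(unfold d; lra) k). fold q.
    unfold Rdiv. rewrite <- (Rmult_1_l (/ (1 - q))) at 2. apply Rmult_le_compat_r. left; apply Rinv_0_lt_compat; lra.
    apply exp_le_1. pose proof (pos_INR k). assert (0 <= INR k * d) by (unfold d; nra). lra. }
  replace (bc k s * exp (- (INR k * x1)) - bc k s * exp (- (INR k * x2))) with (bc k s * (exp (- (INR k * x1)) - exp (- (INR k * x2)))) by ring.
  apply Rle_trans with (bc k s * ((x2 - x1) * (INR k * exp (- (INR k * x1))))).
  - apply Rmult_le_compat_l; auto. lra.
  - replace ((x2 - x1) * (/ (1 - q) * (bc k s * exp (- (INR k * x0))))) with (bc k s * ((x2 - x1) * (/ (1 - q) * exp (- (INR k * x0))))) by ring.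
    apply Rmult_le_compat_l; auto. apply Rmult_le_compat_l; lra.
Qed.

Lemma chi_cont t : continuity (fun w => - w + t * G w).
Proof.
  intros x. apply cont_pt_of. apply (@continuous_plus R_UniformSpace R_AbsRing R_NormedModule (fun w => - w) (fun w => t * G w)).
  apply (@continuous_opp R_UniformSpace R_AbsRing R_NormedModule (fun w => w)). apply continuous_id.
  apply (continuous_scal_r t G). apply G_cont.
Qed.

Theorem time_t t : 0 < t -> M t = G (t * M t - A t) /\ t * phi (t * M t - A t) <= 1.
Proof.
  intros Ht.
  destruct (ustar_ex a K Ha k0 Hk0 Hak0 t Ht) as [c Hc].
  set (chi := fun w => - w + t * G w).
  assert (Hchi : forall w, xs v K w t = chi w) by (intros; unfold xs, chi; ring).
  assert (Hpc : 0 < phi c) by apply (phi_pos a K Ha k0 Hk0 Hak0).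
  assert (Hdec : forall w1 w2, w1 < w2 -> w2 <= c -> chi w2 < chi w1).
  { intros w1 w2 H12 H2c. unfold chi. destruct (G_lt a K Ha k0 Hk0 Hak0 w1 w2 H12) as [_ Hh].
    assert (phi w2 <= phi c) by (apply (phi_le a K Ha k0 Hk0 Hak0); auto).
    assert (t * (G w2 - G w1) < t * (phi w2 * (w2 - w1))) by (apply Rmult_lt_compat_l; auto).
    assert (t * phi w2 <= 1) by (rewrite <- Hc; apply Rmult_le_compat_l; lra). nra. }
  assert (Hle_chi : forall w1 w2, w1 <= w2 -> w2 <= c -> chi w2 <= chi w1).
  { intros w1 w2 H12 H2c. destruct (Req_dec w1 w2). subst; lra. left; apply Hdec; lra. }
  pose proof (Hin v Hsol t (Rlt_le _ _ Ht)) as [_ Hex].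
  assert (HMle : forall N, fsum (v t) N <= M t) by (intros; apply (fsum_le_M v Hsol); lra).
  assert (HGc : continuous G c) by apply G_cont.
  destruct (Rle_or_lt (chi c) (A t)) as [HA|HB].
  -
    set (w0 := Rmin c (- A t)).
    assert (Hw0c : w0 <= c) by apply Rmin_l.
    assert (Hchiw0 : A t <= chi w0).
    { unfold chi. pose proof (G_pos a K Ha k0 Hk0 Hak0 w0). assert (w0 <= - A t) by apply Rmin_r. nra. }
    destruct (IVT_gen chi w0 c (A t) (chi_cont t)) as [w [Hw Hchiw]].
    { rewrite Rmin_right, Rmax_left by lra. lra. }
    rewrite Rmin_left, Rmax_right in Hw by lra.
    assert (HMG : M t <= G w).
    { unfold P7.M, m0. apply series_le_bound; auto. intros N.
      rewrite <- (Yx_v N t) by lra. rewrite <- Hchiw, <- Hchi, <- Yc_Yx. apply (char_S v Hsol K HK). lra. }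
    assert (Hclaim : forall w', w' < c -> w' <= w -> G w' <= M t).
    { intros w' Hw'c Hw'w.
      assert (forall eps, 0 < eps -> G w' - eps <= M t).
      { intros eps Heps. destruct (char_conv v Hsol K HK k0 Hk0 Hak0 t w' c Ht Hw'c ltac:(lra) eps Heps) as [N0 HN0].
        specialize (HN0 N0 (le_n _)). rewrite Yc_Yx, Hchi in HN0.
        assert (Yx N0 t (chi w') <= Yx N0 t (A t)) by (apply Yx_anti; rewrite <- Hchiw; apply Hle_chi; lra).
        rewrite (Yx_v N0 t) in H by lra. specialize (HMle N0). lra. }
      destruct (Rle_or_lt (G w') (M t)) as [Hok|Hbad]; auto. exfalso. specialize (H ((G w' - M t) / 2) ltac:(lra)). lra. }
    assert (HGw : G w <= M t).
    { destruct (Req_dec w c) as [->|Hne].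
      - apply le_of_cont_left; auto. intros y Hy. apply Hclaim; lra.
      - apply Hclaim; lra. }
    assert (HMw : M t = G w) by lra.
    assert (Hu : t * M t - A t = w) by (rewrite HMw, <- Hchiw; unfold chi; ring).
    rewrite Hu. split; auto. rewrite <- Hc. apply Rmult_le_compat_l; [lra|]. apply (phi_le a K Ha k0 Hk0 Hak0); lra.
  -
    exfalso.
    set (x0 := A t). set (x1 := chi c). set (q := exp (- ((x1 - x0) / 2))).
    assert (Hq : q < 1) by (unfold q; rewrite <- exp_0; apply exp_increasing; unfold x1, x0; lra).
    assert (Hq0 : 0 < q) by apply exp_pos.
    set (L := M t / (1 - q)).
    assert (HM := M_range v Hsol t (Rlt_le _ _ Ht)).
    assert (HL : 0 < L) by (unfold L; apply Rdiv_lt_0_compat; lra).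
    assert (Hkey : forall w', w' < c -> G c <= G w' + (chi w' - chi c) * L).
    { intros w' Hw'.
      apply le_of_cont_left; auto. intros w'' Hw''.
      assert (forall eps, 0 < eps -> G w'' - eps <= G w' + (chi w' - chi c) * L).
      { intros eps Heps. destruct (char_conv v Hsol K HK k0 Hk0 Hak0 t w'' c Ht Hw'' ltac:(lra) eps Heps) as [N0 HN0].
        specialize (HN0 N0 (le_n _)). rewrite Yc_Yx, Hchi in HN0.
        assert (Yx N0 t (chi w'') <= Yx N0 t x1) by (apply Yx_anti; unfold x1; left; apply Hdec; lra).
        assert (Hl := Yx_lip N0 t x0 x1 (chi w') HB ltac:(unfold x1; left; apply Hdec; lra)). fold q in Hl.
        assert (Yx N0 t (chi w') <= G w') by (rewrite <- Hchi, <- Yc_Yx; apply (char_S v Hsol K HK); lra).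
        assert (Yx N0 t x0 <= M t) by (unfold x0; rewrite Yx_v by lra; auto).
        assert ((chi w' - x1) / (1 - q) * Yx N0 t x0 <= (chi w' - chi c) * L).
        { unfold L, x1. replace ((chi w' - chi c) * (M t / (1 - q))) with ((chi w' - chi c) / (1 - q) * M t) by (field; lra).
          apply Rmult_le_compat_l; auto. apply Rdiv_le_0_compat; [|lra]. assert (chi c < chi w') by (apply Hdec; lra). lra. }
        lra. }
      destruct (Rle_or_lt (G w'') (G w' + (chi w' - chi c) * L)); auto. specialize (H ((G w'' - (G w' + (chi w' - chi c) * L)) / 2) ltac:(lra)). lra. }
    assert (Hineq : forall w', w' < c -> phi w' < L * (t * (phi c - phi w'))).
    { intros w' Hw'. specialize (Hkey w' Hw').
      destruct (G_lt a K Ha k0 Hk0 Hak0 w' c Hw') as [Hg1 _].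
      assert (Hchi' : chi w' - chi c <= (c - w') * (1 - t * phi w')) by (unfold chi; nra).
      assert ((chi w' - chi c) * L <= (c - w') * (1 - t * phi w') * L) by (apply Rmult_le_compat_r; lra).
      assert (phi w' * (c - w') < (c - w') * (1 - t * phi w') * L) by lra.
      assert (1 - t * phi w' = t * (phi c - phi w')) by (rewrite Rmult_minus_distr_l, Hc; ring).
      rewrite H1 in H0. apply Rmult_lt_reg_r with (c - w'). lra. nra. }
    set (eta := phi c / (2 * (L * t + 1))).
    assert (Heta : 0 < eta) by (unfold eta; apply Rdiv_lt_0_compat; nra).
    destruct (cont_eps phi c (phi_cont a K c) eta Heta) as [d [Hd Hy]].
    specialize (Hy (c - d / 2)). assert (Rabs (c - d / 2 - c) < d) by (rewrite Rabs_left; lra).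
    specialize (Hy H). apply Rabs_def2 in Hy.
    specialize (Hineq (c - d / 2) ltac:(lra)).
    assert (L * (t * (phi c - phi (c - d / 2))) < L * t * eta) by (replace (L * t * eta) with (L * (t * eta)) by ring; apply Rmult_lt_compat_l; [lra|]; apply Rmult_lt_compat_l; lra).
    assert (L * t * eta <= phi c / 2).
    { unfold eta. replace (L * t * (phi c / (2 * (L * t + 1)))) with (phi c / 2 * (L * t / (L * t + 1))) by (field; nra).
      assert (L * t / (L * t + 1) <= 1). { apply Rmult_le_reg_r with (L * t + 1). nra. unfold Rdiv. rewrite Rmult_assoc, Rinv_l by nra. nra. }
      assert (0 <= L * t / (L * t + 1)) by (apply Rdiv_le_0_compat; nra). nra. }
    assert (eta <= phi c / 2).
    { unfold eta. apply Rmult_le_reg_r with (2 * (L * t + 1)). nra. unfold Rdiv. rewrite Rmult_assoc, Rinv_l by nra. nra. }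
    lra.
Qed.

End Main.

End P14.
Import P14.

Module P15.

Section Abstract.
Variables (M A G phi : R -> R).
Hypothesis HG_lt : forall w1 w2, w1 < w2 -> phi w1 * (w2 - w1) < G w2 - G w1 < phi w2 * (w2 - w1).
Hypothesis Hphi_pos : forall w, 0 < phi w.
Hypothesis Hphi_incr : forall w1 w2, w1 < w2 -> phi w1 < phi w2.
Hypothesis HMG : forall s, 0 <= s -> M s = G (s * M s - A s).
Hypothesis HB : forall s, 0 <= s -> s * phi (s * M s - A s) <= 1.
Hypothesis HA : forall r s, 0 <= r -> r <= s -> (s - r) * M s <= A s - A r <= (s - r) * M r.
Hypothesis HM0 : M 0 = G 0.
Hypothesis HMle : forall s, 0 <= s -> M s <= M 0.
Hypothesis HA0 : A 0 = 0.

Definition uu s := s * M s - A s.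
Definition HH s w := w - s * G w.

Lemma phi_le' w1 w2 : w1 <= w2 -> phi w1 <= phi w2.
Proof. intros. destruct (Req_dec w1 w2). subst; lra. left; apply Hphi_incr; lra. Qed.

Lemma G_incr' w1 w2 : w1 < w2 -> G w1 < G w2.
Proof. intros. pose proof (HG_lt w1 w2 H). pose proof (Hphi_pos w1). nra. Qed.

Lemma u0 : uu 0 = 0.
Proof. unfold uu. rewrite HA0. ring. Qed.

Lemma u_nonpos s : 0 <= s -> uu s <= 0.
Proof.
  intros Hs. destruct (Rle_or_lt (uu s) 0); auto. exfalso.
  pose proof (G_incr' 0 (uu s) H). pose proof (HMG s Hs). pose proof (HMle s Hs). unfold uu in *. lra.
Qed.

Lemma M_mono' r s : 0 <= r -> r <= s -> M s <= M r.
Proof.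
  intros Hr Hrs. destruct (HA r s Hr Hrs). destruct (Req_dec r s). subst; lra. assert (0 < s - r) by lra.
  destruct (Rle_or_lt (M s) (M r)); auto. assert ((s - r) * M r < (s - r) * M s) by (apply Rmult_lt_compat_l; lra). lra.
Qed.

Lemma u_mono r s : 0 <= r -> r <= s -> uu s <= uu r.
Proof.
  intros Hr Hrs. unfold uu. destruct (HA r s Hr Hrs) as [H1 _].
  pose proof (M_mono' r s Hr Hrs).
  assert (r * (M s - M r) <= 0) by (assert (0 <= r * (M r - M s)) by (apply Rmult_le_pos; lra); lra).
  nra.
Qed.

Lemma F_ineq r s : 0 <= r -> r <= s -> HH s (uu r) <= HH s (uu s).
Proof.
  intros Hr Hrs. unfold HH, uu. rewrite <- (HMG s) by lra. rewrite <- (HMG r) by lra.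
  destruct (HA r s Hr Hrs). nra.
Qed.

Lemma Inc s w1 w2 : 0 <= s -> w1 < w2 -> s * phi w2 <= 1 -> HH s w1 < HH s w2.
Proof.
  intros Hs H12 Hp. unfold HH. destruct (HG_lt w1 w2 H12) as [_ Hh].
  destruct (Req_dec s 0). subst. lra.
  assert (s * (G w2 - G w1) < s * (phi w2 * (w2 - w1))) by (apply Rmult_lt_compat_l; lra). nra.
Qed.

Lemma pre_gel t : 0 <= t -> t * phi 0 <= 1 -> uu t = 0.
Proof.
  intros Ht Hp. pose proof (u_nonpos t Ht). destruct H as [H|H]; auto. exfalso.
  pose proof (F_ineq 0 t (Rle_refl 0) Ht). rewrite u0 in H0.
  pose proof (Inc t (uu t) 0 Ht H Hp). lra.
Qed.

Lemma post_gel t c : 0 < t -> t * phi c = 1 -> c <= 0 -> uu t = c.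
Proof.
  intros Ht Hc Hc0.
  assert (Hub : uu t <= c).
  { destruct (Rle_or_lt (uu t) c); auto. pose proof (Hphi_incr _ _ H). pose proof (HB t ltac:(lra)). fold (uu t) in H1. nra. }
  destruct Hub as [Hlt|]; auto. exfalso.
  set (a := uu t) in *. rename c into b.
  assert (Hphib : forall s, 0 <= s -> s <= t -> s * phi b <= 1).
  { intros s Hs Hst. rewrite <- Hc. apply Rmult_le_compat_r; [pose proof (Hphi_pos b); lra|lra]. }
  assert (Claim1 : forall r, 0 <= r -> r <= t -> uu r <= b -> uu r = a).
  { intros r Hr Hrt Hrb. pose proof (u_mono r t Hr Hrt). fold a in H.
    destruct H as [H|H]; auto. exfalso.
    pose proof (F_ineq r t Hr Hrt). fold a in H0.
    assert (t * phi (uu r) <= 1) by (rewrite <- Hc; apply Rmult_le_compat_l; [lra|apply phi_le'; auto]).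
    pose proof (Inc t a (uu r) ltac:(lra) H H1). lra. }
  destruct Hc0 as [Hb0|Hb0].
  2:{ pose proof (Claim1 0 (Rle_refl 0) ltac:(lra) ltac:(rewrite u0; lra)). rewrite u0 in H. unfold a in *. lra. }
  set (S := fun r => 0 <= r <= t /\ b < uu r).
  assert (HS0 : S 0) by (split; [lra|rewrite u0; lra]).
  assert (HSb : bound S) by (exists t; intros r [Hr _]; lra).
  destruct (completeness S HSb (ex_intro _ 0 HS0)) as [s0 [Hup Hlub]].
  assert (Hs00 : 0 <= s0) by (apply Hup; auto).
  assert (Hs0t : s0 <= t) by (apply Hlub; intros r [Hr _]; lra).
  assert (Hnot : forall r, s0 < r -> r <= t -> uu r = a).
  { intros r Hr Hrt. apply Claim1; try lra. destruct (Rle_or_lt (uu r) b); auto.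
    assert (r <= s0) by (apply Hup; split; [lra|auto]). lra. }
  destruct (Rlt_or_le b (uu s0)) as [Hin|Hout].
  -
    assert (Hs0t' : s0 < t) by (destruct (Req_dec s0 t); [subst s0; unfold a in *; lra|lra]).
    set (g := G (uu s0) - G a).
    assert (Hg : 0 < g) by (unfold g; assert (G a < G (uu s0)) by (apply G_incr'; pose proof (u_mono s0 t Hs00 Hs0t); fold a in H; lra); lra).
    assert (Hlim : uu s0 - a <= s0 * g).
    { destruct (Rle_or_lt (uu s0 - a) (s0 * g)); auto. exfalso.
      set (d := Rmin (t - s0) ((uu s0 - a - s0 * g) / (2 * g))).
      assert (Hd : 0 < d) by (apply Rmin_pos; [lra|apply Rdiv_lt_0_compat; lra]).
      assert (Hd1 : d <= t - s0) by apply Rmin_l.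
      assert (Hd2 : d <= (uu s0 - a - s0 * g) / (2 * g)) by apply Rmin_r.
      pose proof (F_ineq s0 (s0 + d) Hs00 ltac:(lra)).
      rewrite (Hnot (s0 + d)) in H0 by lra. unfold HH in H0. fold g in H0.
      assert (d * g <= (uu s0 - a - s0 * g) / 2).
      { apply Rle_trans with ((uu s0 - a - s0 * g) / (2 * g) * g). apply Rmult_le_compat_r; lra. right; field; lra. }
      unfold g in *. nra. }
    pose proof (Inc s0 a (uu s0) Hs00 ltac:(pose proof (u_mono s0 t Hs00 Hs0t); fold a in H; lra) (HB s0 Hs00)).
    unfold HH in H. fold g in Hlim. unfold g in Hlim. nra.
  -
    assert (Hus0 : uu s0 = a) by (apply Claim1; auto).
    assert (Hs0pos : 0 < s0).
    { destruct Hs00 as [|H]; auto. subst s0. rewrite u0 in Hus0. unfold a in *. exfalso. lra. }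
    set (kap := HH s0 b - HH s0 a).
    assert (Hkap : 0 < kap) by (unfold kap; pose proof (Inc s0 a b ltac:(lra) ltac:(lra) (Hphib s0 ltac:(lra) Hs0t)); lra).
    set (del := Rmin (s0 / 2) (kap * s0 / (2 * (- b + 1)))).
    assert (Hdel : 0 < del) by (apply Rmin_pos; [lra|apply Rdiv_lt_0_compat; nra]).
    assert (Hdel1 : del <= s0 / 2) by apply Rmin_l.
    assert (Hdel2 : del <= kap * s0 / (2 * (- b + 1))) by apply Rmin_r.
    destruct (classic (exists r, S r /\ s0 - del < r)) as [[r [[Hr Hbr] Hrd]]|Hno].
    2:{ assert (s0 <= s0 - del); [|lra]. apply Hlub. intros r Hr. destruct (Rle_or_lt r (s0 - del)); auto. exfalso; apply Hno; eauto. }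
    assert (Hrs0 : r <= s0) by (apply Hup; split; auto).
    assert (Hrs0' : r < s0) by (destruct (Req_dec r s0); [subst r; lra|lra]).
    assert (Hrpos : s0 / 2 < r) by lra.
    pose proof (F_ineq r s0 ltac:(lra) Hrs0). rewrite Hus0 in H.
    (* H s0 (u r) >= H s0 b - |b| (s0 - r)/r *)
    set (ur := uu r) in *.
    assert (Hur0 : ur <= 0) by (apply u_nonpos; lra).
    assert (HBr : r * phi ur <= 1) by (apply HB; lra).
    destruct (HG_lt b ur Hbr) as [_ Hg2].
    assert (Hphir : phi ur <= / r).
    { apply Rmult_le_reg_l with r. lra. rewrite Rinv_r by lra. lra. }
    assert (Hst : HH s0 ur - HH s0 b >= (ur - b) * (1 - s0 / r)).
    { unfold HH. assert (s0 * (G ur - G b) <= s0 * (phi ur * (ur - b))) by (apply Rmult_le_compat_l; lra).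
      assert (s0 * (phi ur * (ur - b)) <= s0 * (/ r * (ur - b))) by (apply Rmult_le_compat_l; [lra|]; apply Rmult_le_compat_r; lra).
      unfold Rdiv. nra. }
    assert (Hbound : (ur - b) * (1 - s0 / r) >= - (- b) * ((s0 - r) / r)).
    { replace (1 - s0 / r) with (- ((s0 - r) / r)) by (field; lra).
      assert (0 <= (s0 - r) / r) by (apply Rdiv_le_0_compat; lra). nra. }
    assert (Hsmall : (- b) * ((s0 - r) / r) < kap).
    { assert ((s0 - r) / r < 2 * del / s0).
      { apply Rmult_lt_reg_r with r. lra. unfold Rdiv. rewrite Rmult_assoc, Rinv_l by lra.
        apply Rlt_le_trans with (2 * del * / s0 * (s0 / 2)). 2:{ apply Rmult_le_compat_l; [|lra]. apply Rmult_le_pos. lra. left; apply Rinv_0_lt_compat; lra. }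
        replace (2 * del * / s0 * (s0 / 2)) with del by (field; lra). lra. }
      assert (2 * del / s0 <= kap / (- b + 1)).
      { apply Rmult_le_reg_r with s0. lra. unfold Rdiv. rewrite Rmult_assoc, Rinv_l by lra.
        apply Rle_trans with (2 * (kap * s0 / (2 * (- b + 1)))). lra. right. field. lra. }
      assert ((- b) * ((s0 - r) / r) <= (- b) * (kap / (- b + 1))) by (apply Rmult_le_compat_l; lra).
      assert ((- b) * (kap / (- b + 1)) < kap).
      { apply Rmult_lt_reg_r with (- b + 1). lra. replace (- b * (kap / (- b + 1)) * (- b + 1)) with (- b * kap) by (field; lra). nra. }
      lra. }
    unfold kap in *. lra.
Qed.

End Abstract.

End P15.
Import P15.


Theorem lemma5 (v : R -> nat -> R) :
  in_Nstar (v 0) ->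
  (exists k, (1 <= k)%nat /\ v 0 k <> 0) ->
  critical_solution v ->
  forall T, 0 <= T ->
    (T <= / m1 (v 0) -> Phi v T = 0 /\ RInt (Phi v) 0 T = 0) /\
    (/ m1 (v 0) <= T -> Phi v T = F0 (v 0) T /\ RInt (Phi v) 0 T = G0 (v 0) T).
Proof.
  intros Hstar Hnz Hsol T HT.
  destruct Hstar as [_ [K HK]].
  assert (Ha : forall k, (1 <= k)%nat -> 0 <= (fun k => v 0 k) k) by (intros; apply (v_nonneg v Hsol); auto; lra).
  destruct Hnz as [k0 [Hk0 Hne]].
  assert (Hak0 : 0 < v 0 k0) by (pose proof (Ha k0 Hk0); simpl in H; lra).
  assert (Hk0K : (1 <= k0 <= K)%nat).
  { split; auto. destruct (Nat.le_gt_cases k0 K); auto. exfalso. apply Hne. apply HK; auto. }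
  set (a := fun k => v 0 k) in *.
  set (Gf := G a K). set (ph := phi a K).
  assert (HGlt : forall w1 w2, w1 < w2 -> ph w1 * (w2 - w1) < Gf w2 - Gf w1 < ph w2 * (w2 - w1)).
  { intros; apply (G_lt a K Ha k0 Hk0K Hak0); auto. }
  assert (Hphipos : forall w, 0 < ph w) by (intros; apply (phi_pos a K Ha k0 Hk0K Hak0)).
  assert (Hphiincr : forall w1 w2, w1 < w2 -> ph w1 < ph w2) by (intros; apply (phi_incr a K Ha k0 Hk0K Hak0); auto).
  assert (Hm0 : m0 (v 0) = Gf 0).
  { unfold m0. rewrite (series_finite (v 0) K HK). unfold Gf, P5.G. apply fsum_ext. intros k _.
    unfold a. rewrite Rmult_0_r, exp_0. ring. }
  assert (Hm1 : m1 (v 0) = ph 0).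
  { unfold m1. rewrite (series_finite (fun k => INR k * v 0 k) K).
    unfold ph, P5.phi. apply fsum_ext. intros k _. unfold a. rewrite Rmult_0_r, exp_0. ring.
    intros k Hk. rewrite HK by auto. ring. }
  set (Mf := P7.M v). set (Af := P8.A v).
  assert (HM0 : Mf 0 = Gf 0) by (unfold Mf, P7.M; auto).
  assert (HA0 : Af 0 = 0) by apply A0.
  assert (HMle : forall s, 0 <= s -> Mf s <= Mf 0) by (intros; apply (M_range v Hsol); auto).
  assert (HA : forall r s, 0 <= r -> r <= s -> (s - r) * Mf s <= Af s - Af r <= (s - r) * Mf r).
  { intros; apply (A_bounds v Hsol); auto. }
  assert (HMG : forall s, 0 <= s -> Mf s = Gf (s * Mf s - Af s)).
  { intros s Hs. destruct Hs as [Hs|Hs].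
    - apply (time_t v Hsol K HK k0 Hk0K Hak0 s Hs).
    - subst s. rewrite HA0, Rmult_0_l, Rminus_0_r. auto. }
  assert (HB : forall s, 0 <= s -> s * ph (s * Mf s - Af s) <= 1).
  { intros s Hs. destruct Hs as [Hs|Hs].
    - apply (time_t v Hsol K HK k0 Hk0K Hak0 s Hs).
    - subst s. lra. }
  assert (HPhi : Phi v T = Mf 0 - Mf T) by reflexivity.
  assert (HInt : RInt (Phi v) 0 T = T * Mf 0 - Af T).
  { assert (H1 : is_RInt (fun _ => Mf 0) 0 T (T * Mf 0)).
    { pose proof (@is_RInt_const R_NormedModule 0 T (Mf 0)) as H. replace (T * Mf 0) with (scal (T - 0) (Mf 0)) by (unfold scal; simpl; unfold mult; simpl; ring). exact H. }
    assert (H2 : is_RInt Mf 0 T (Af T)).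
    { unfold Af, P8.A. exact (@RInt_correct R_CompleteNormedModule Mf 0 T (M_ex_RInt v Hsol 0 T (Rle_refl 0) HT)). }
    pose proof (@is_RInt_minus R_NormedModule _ _ _ _ _ _ H1 H2) as H3.
    assert (H4 : is_RInt (Phi v) 0 T (T * Mf 0 - Af T)).
    { eapply is_RInt_ext; [|exact H3]. intros x _. reflexivity. }
    exact (@is_RInt_unique R_CompleteNormedModule _ _ _ _ H4). }
  assert (Hphi0 : 0 < ph 0) by auto.
  split.
  - intros HTle.
    assert (Hp : T * ph 0 <= 1).
    { assert (HTle' : T <= / ph 0) by (rewrite <- Hm1; exact HTle). clear HTle. rename HTle' into HTle. apply Rmult_le_reg_r with (/ ph 0). apply Rinv_0_lt_compat; auto.
      rewrite Rmult_assoc, Rinv_r, Rmult_1_r, Rmult_1_l by lra. auto. }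
    assert (Hu : uu Mf Af T = 0) by (eapply pre_gel; eauto).
    unfold uu in Hu. assert (HMT : Mf T = Gf 0) by (rewrite HMG by auto; rewrite Hu; auto).
    split.
    + rewrite HPhi, HMT, HM0. ring.
    + rewrite HInt. rewrite HM0. replace (Af T) with (T * Mf T) by lra. rewrite HMT. match goal with |- ?x = ?y => change (@eq R x y) end. ring.
  - intros HTge.
    assert (HTge' : / ph 0 <= T) by (rewrite <- Hm1; exact HTge). clear HTge. rename HTge' into HTge.
    assert (HTpos : 0 < T) by (pose proof (Rinv_0_lt_compat _ Hphi0); lra).
    assert (Hp : 1 <= T * ph 0).
    { apply Rmult_le_reg_r with (/ ph 0). apply Rinv_0_lt_compat; auto.
      rewrite Rmult_assoc, Rinv_r, Rmult_1_r, Rmult_1_l by lra. auto. }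
    destruct (ustar_ex a K Ha k0 Hk0K Hak0 T HTpos) as [c Hc]. fold ph in Hc.
    assert (Hc0 : c <= 0).
    { destruct (Rle_or_lt c 0); auto. pose proof (Hphiincr 0 c H). nra. }
    assert (Hu : uu Mf Af T = c) by (eapply post_gel; eauto).
    unfold uu in Hu.
    assert (HMT : Mf T = Gf c) by (rewrite HMG by lra; rewrite Hu; auto).
    assert (Hw : forall x, wfun a x = / ph (- x)).
    { intros x. unfold wfun. f_equal. rewrite (series_finite (fun k => INR k * a k * exp (- INR k * x)) K).
      unfold ph, P5.phi. apply fsum_ext. intros k _. unfold a. f_equal. f_equal. ring.
      intros k Hk. rewrite HK by auto. ring. }
    assert (Hwinv : winv a T = - c).
    { unfold winv. set (P := fun x => wfun a x = T).
      assert (HP : P (epsilon (inhabits 0) P)).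
      { apply epsilon_spec. exists (- c). unfold P. rewrite Hw, Ropp_involutive.
        apply Rmult_eq_reg_l with (ph c). rewrite Rinv_r by (pose proof (Hphipos c); lra). lra. pose proof (Hphipos c); lra. }
      unfold P in HP. rewrite Hw in HP. set (x := epsilon (inhabits 0) P) in *.
      assert (T * ph (- x) = 1).
      { rewrite <- HP. rewrite Rinv_l; auto. pose proof (Hphipos (- x)); lra. }
      assert (- x = c) by (apply (ustar_unique a K Ha k0 Hk0K Hak0 T); auto). lra. }
    assert (HF0 : F0 a T = Gf 0 - Gf c).
    { unfold F0. rewrite Hwinv. rewrite (series_finite (fun k => a k * (1 - exp (- INR k * - c))) K).
      unfold Gf, P5.G. rewrite <- fsum_minus. apply fsum_ext. intros k _. unfold a.
      rewrite Rmult_0_r, exp_0. replace (- INR k * - c) with (INR k * c) by ring. ring.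
      intros k Hk. rewrite HK by auto. ring. }
    split.
    + rewrite HPhi, HF0, HMT, HM0. ring.
    + rewrite HInt. unfold G0. rewrite HF0, Hwinv. rewrite HM0. replace (Af T) with (T * Mf T - c) by lra. rewrite HMT. match goal with |- ?x = ?y => change (@eq R x y) end. ring.
Qed.
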